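(* Assume the standing assumptions on $A,\Omega,R,K$ in the context, and let $\rho$ be a fixed bounded smooth function on $\Omega$. Then for $\theta\in]-A,A[$, $\partial_\theta\lambda(\theta,\rho)=-\int_\Omega\partial_\theta R(x,\theta)\,\psi^\theta(x)^2\,dx$.
   Context: Standing assumptions: $A>0$; $\Omega=\bigcup_{i=1}^m ]a_i,b_i[\subset\mathbb{R}$ with $a_1<b_1<\dots<a_m<b_m$; $R\in C^1(\overline\Omega\times[-A,A])$ with $\|R\|_{W^{1,\infty}(\Omega\times]-A,A[)}<C_R$; $K$ is a $C^1$ even function with $K>0$, $0<c_K<K<C_K$, $|K'|<C_K$. $L\phi(x)=\int_\Omega[\phi(x)-\phi(y)]K(x-y)dy$. $\lambda(\theta,\rho)$ is the principal eigenvalue (eigenvalue with a positive eigenfunction) of $\psi\mapsto-\psi''+L\psi-(R(\cdot,\theta)-\rho)\psi$ on $\Omega$ with Neumann boundary condition on $\partial\Omega$, and $\psi^\theta$ is the associated positive eigenfunction normalized by $\|\psi^\theta\|_{L^2(\Omega)}=1$. *)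

(* Defs.v *)
From Stdlib Require Import Reals Lra.
From Coquelicot Require Import Coquelicot.
Open Scope R_scope.

Definition ordered_intervals (m : nat) (a b : nat -> R) : Prop :=
  (0 < m)%nat /\
  (forall i, (i < m)%nat -> a i < b i) /\
  (forall i, (S i < m)%nat -> b i < a (S i)).

Definition inOmega (m : nat) (a b : nat -> R) (x : R) : Prop :=
  exists i, (i < m)%nat /\ a i < x < b i.

Definition inOmegaBar (m : nat) (a b : nat -> R) (x : R) : Prop :=
  exists i, (i < m)%nat /\ a i <= x <= b i.

Fixpoint sum_to (m : nat) (f : nat -> R) : R :=
  match m with
  | O => 0
  | S k => sum_to k f + f k
  end.

Definition IntOmega (m : nat) (a b : nat -> R) (f : R -> R) : R :=
  sum_to m (fun i => RInt f (a i) (b i)).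

Definition Lop (m : nat) (a b : nat -> R) (K : R -> R) (phi : R -> R) (x : R) : R :=
  IntOmega m a b (fun y => (phi x - phi y) * K (x - y)).

Definition kernel_hyp (K : R -> R) (cK CK : R) : Prop :=
  0 < cK /\
  (forall x, K (- x) = K x) /\
  (forall x, ex_derive K x) /\
  (forall x, continuous (Derive K) x) /\
  (forall x, cK < K x < CK) /\
  (forall x, Rabs (Derive K x) < CK).

Definition closedDom (m : nat) (a b : nat -> R) (A : R) (p : R * R) : Prop :=
  inOmegaBar m a b (fst p) /\ - A <= snd p <= A.

Definition openDom (m : nat) (a b : nat -> R) (A : R) (p : R * R) : Prop :=
  inOmega m a b (fst p) /\ - A < snd p < A.

Definition cont_on2 (D : R * R -> Prop) (g : R -> R -> R) : Prop :=
  forall p, D p ->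
    filterlim (fun q : R * R => g (fst q) (snd q)) (within D (locally p))
              (locally (g (fst p) (snd p))).

(* Standing assumptions on R: R in C^1(\bar Omega x [-A,A]), i.e. R is
   continuous on the closed set, has partial derivatives in the interior,
   and these partial derivatives extend continuously to the closed set;
   moreover ||R||_{W^{1,oo}} = max(sup|R|, sup|d_x R|, sup|d_theta R|) < C_R. *)
Definition reaction_hyp (m : nat) (a b : nat -> R) (A : R)
    (Rf : R -> R -> R) (CR : R) : Prop :=
  exists Rx Rt : R -> R -> R,
    cont_on2 (closedDom m a b A) Rf /\
    cont_on2 (closedDom m a b A) Rx /\
    cont_on2 (closedDom m a b A) Rt /\
    (forall x t, openDom m a b A (x, t) ->
       is_derive (fun y => Rf y t) x (Rx x t) /\
       is_derive (fun s => Rf x s) t (Rt x t)) /\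
    (exists c, c < CR /\
       forall x t, openDom m a b A (x, t) ->
         Rabs (Rf x t) <= c /\ Rabs (Rx x t) <= c /\ Rabs (Rt x t) <= c).

Definition bounded_smooth_on_Omega (m : nat) (a b : nat -> R) (rho : R -> R) : Prop :=
  (exists M, forall x, inOmega m a b x -> Rabs (rho x) <= M) /\
  (forall n x, inOmega m a b x -> ex_derive (Derive_n rho n) x).

(* (lam, psi) is a principal eigenpair of
     psi |-> - psi'' + L psi - (R(., theta) - rho) psi
   on Omega with Neumann boundary conditions: psi is a classical solution
   (twice differentiable in Omega, continuous up to the boundary of each
   component, psi' having limit 0 at each endpoint from inside Omega),
   and psi > 0 in Omega. *)
Definition principal_eigenpair (m : nat) (a b : nat -> R) (K : R -> R)
    (Rf : R -> R -> R) (rho : R -> R) (theta lam : R) (psi : R -> R) : Prop :=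
  (forall x, inOmega m a b x ->
     ex_derive psi x /\ ex_derive (Derive psi) x) /\
  (forall i, (i < m)%nat ->
     filterlim psi (at_right (a i)) (locally (psi (a i))) /\
     filterlim psi (at_left (b i)) (locally (psi (b i))) /\
     filterlim (Derive psi) (at_right (a i)) (locally 0) /\
     filterlim (Derive psi) (at_left (b i)) (locally 0)) /\
  (forall x, inOmega m a b x ->
     - Derive (Derive psi) x + Lop m a b K psi x
       - (Rf x theta - rho x) * psi x = lam * psi x) /\
  (forall x, inOmega m a b x -> 0 < psi x).

Definition L2_normalized (m : nat) (a b : nat -> R) (psi : R -> R) : Prop :=
  IntOmega m a b (fun x => psi x ^ 2) = 1.

(* Main.v *)
Require Import Defs.
From Stdlib Require Import Reals Lra Psatz Classical.
From Coquelicot Require Import Coquelicot.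
Open Scope R_scope.

Lemma ballR (x e y : R) : ball x e y <-> Rabs (y - x) < e.
Proof. reflexivity. Qed.

Lemma cont_plus (f g : R -> R) x : continuous f x -> continuous g x -> continuous (fun y => f y + g y) x.
Proof. intros H1 H2; exact (continuous_plus f g x H1 H2). Qed.
Lemma cont_mult (f g : R -> R) x : continuous f x -> continuous g x -> continuous (fun y => f y * g y) x.
Proof. intros H1 H2; exact (continuous_mult f g x H1 H2). Qed.
Lemma cont_opp (f : R -> R) x : continuous f x -> continuous (fun y => - f y) x.
Proof. intros H1; exact (continuous_opp f x H1). Qed.
Lemma cont_minus (f g : R -> R) x : continuous f x -> continuous g x -> continuous (fun y => f y - g y) x.
Proof. intros; apply cont_plus; auto; apply cont_opp; auto. Qed.
Lemma cont_const (c x : R) : continuous (fun _ : R => c) x.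
Proof. apply continuous_const. Qed.
Lemma cont_id (x : R) : continuous (fun y : R => y) x.
Proof. apply continuous_id. Qed.
Lemma cont_inv (f : R -> R) x : continuous f x -> f x <> 0 -> continuous (fun y => / f y) x.
Proof.
  intros Hf Hx. apply continuity_pt_filterlim.
  apply continuity_pt_filterlim in Hf.
  apply (continuity_pt_comp f Rinv); auto.
  apply continuity_pt_filterlim. apply continuity_pt_filterlim.
  apply (continuity_pt_inv (fun y => y)); auto. apply continuity_pt_id.
Qed.

Lemma lip_cont (f : R -> R) x L : 0 <= L ->
  (forall y, Rabs (f y - f x) <= L * Rabs (y - x)) -> continuous f x.
Proof.
  intros HL H. apply filterlim_locally. intros eps.
  assert (Hd : 0 < eps / (L + 1)) by (apply Rdiv_lt_0_compat; [apply cond_pos| lra]).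
  exists (mkposreal _ Hd). intros y Hy. apply ballR in Hy; simpl in Hy. apply ballR.
  specialize (H y). apply Rle_lt_trans with (1 := H).
  apply Rle_lt_trans with ((L+1) * Rabs (y - x)).
  - apply Rmult_le_compat_r; [apply Rabs_pos| lra].
  - apply Rmult_lt_reg_r with (/ (L+1)). apply Rinv_0_lt_compat; lra.
    replace ((L + 1) * Rabs (y - x) * / (L + 1)) with (Rabs (y - x)) by (field; lra).
    exact Hy.
Qed.

Definition clamp (p q x : R) := Rmax p (Rmin q x).

Lemma clamp_id p q x : p <= x <= q -> clamp p q x = x.
Proof. intros. unfold clamp, Rmax, Rmin. repeat destruct Rle_dec; lra. Qed.

Lemma clamp_in p q x : p <= q -> p <= clamp p q x <= q.
Proof. intros. unfold clamp, Rmax, Rmin. repeat destruct Rle_dec; lra. Qed.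

Lemma clamp_lip p q x y : p <= q -> Rabs (clamp p q y - clamp p q x) <= 1 * Rabs (y - x).
Proof. intros. unfold clamp, Rmax, Rmin. repeat destruct Rle_dec; split_Rabs; lra. Qed.

Lemma clamp_cont p q x : p <= q -> continuous (clamp p q) x.
Proof. intros. apply (lip_cont _ _ 1). lra. intros; apply clamp_lip; auto. Qed.

Lemma clamp_clamp p q p' q' x : p <= p' -> p' <= q' -> q' <= q ->
  clamp p q (clamp p' q' x) = clamp p' q' x.
Proof. intros. apply clamp_id. pose proof (clamp_in p' q' x). lra. Qed.

Definition CC (p q : R) (f : R -> R) := forall x, continuous (fun y => f (clamp p q y)) x.

Lemma CC_plus p q f g : CC p q f -> CC p q g -> CC p q (fun x => f x + g x).
Proof. intros H1 H2 x. apply cont_plus; auto. Qed.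
Lemma CC_minus p q f g : CC p q f -> CC p q g -> CC p q (fun x => f x - g x).
Proof. intros H1 H2 x. apply cont_minus; auto. Qed.
Lemma CC_mult p q f g : CC p q f -> CC p q g -> CC p q (fun x => f x * g x).
Proof. intros H1 H2 x. apply cont_mult; auto. Qed.
Lemma CC_opp p q f : CC p q f -> CC p q (fun x => - f x).
Proof. intros H1 x. apply cont_opp; auto. Qed.
Lemma CC_const p q c : CC p q (fun _ => c).
Proof. intros x. apply cont_const. Qed.
Lemma CC_cont p q f : p <= q -> (forall x, continuous f x) -> CC p q f.
Proof. intros Hpq H x. apply continuous_comp. apply clamp_cont; auto. apply H. Qed.
Lemma CC_inv p q f : p <= q -> CC p q f -> (forall x, p <= x <= q -> f x <> 0) -> CC p q (fun x => / f x).
Proof. intros Hpq H1 H2 x. apply cont_inv; auto. apply H2, clamp_in; auto. Qed.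
Lemma CC_ext p q f g : (forall x, p <= x <= q -> f x = g x) -> p <= q -> CC p q f -> CC p q g.
Proof.
  intros He Hpq H x. eapply continuous_ext. 2: apply (H x).
  intros y; simpl. apply He, clamp_in; auto.
Qed.
Lemma CC_sub p q p' q' f : p <= p' -> p' <= q' -> q' <= q -> CC p q f -> CC p' q' f.
Proof.
  intros H1 H2 H3 H x.
  apply continuous_ext with (f := fun y => f (clamp p q (clamp p' q' y))).
  intros y. rewrite (clamp_clamp p q p' q' y); auto.
  apply (continuous_comp (clamp p' q') (fun z => f (clamp p q z))). apply clamp_cont; lra. apply H.
Qed.

Lemma CC_ex_RInt p q f : p <= q -> CC p q f -> ex_RInt f p q.
Proof.
  intros Hpq H. apply (ex_RInt_ext (fun y => f (clamp p q y))).
  intros x Hx. rewrite Rmin_left in Hx by auto. rewrite Rmax_right in Hx by auto.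
  rewrite clamp_id; auto; lra.
  apply (ex_RInt_continuous (V := R_CompleteNormedModule)). intros; apply H.
Qed.

Lemma RInt_clamp p q (f : R -> R) : p <= q -> RInt (fun y => f (clamp p q y)) p q = RInt f p q.
Proof.
  intros Hpq. apply RInt_ext. intros x Hx.
  rewrite Rmin_left in Hx by auto. rewrite Rmax_right in Hx by auto.
  rewrite clamp_id; auto; lra.
Qed.

Lemma locally_interior p q c : p < c < q -> locally c (fun t => p < t < q).
Proof.
  intros Hc. assert (H : 0 < Rmin (c - p) (q - c)) by (apply Rmin_pos; lra).
  exists (mkposreal _ H). intros t Ht. apply ballR in Ht; cbn [pos] in Ht.
  pose proof (Rmin_l (c-p) (q-c)); pose proof (Rmin_r (c-p) (q-c)). apply Rabs_def2 in Ht. unfold minus, plus, opp in Ht; simpl in Ht. lra.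
Qed.

Lemma locally_clamp p q c (f : R -> R) : p < c < q ->
  locally c (fun t => f t = f (clamp p q t)).
Proof.
  intros Hc. eapply filter_imp. 2: apply (locally_interior p q c Hc).
  intros t Ht; simpl. rewrite clamp_id; auto; lra.
Qed.

Lemma mvt_open p q (f df : R -> R) : p < q -> CC p q f ->
  (forall x, p < x < q -> is_derive f x (df x)) ->
  exists c, p < c < q /\ f q - f p = df c * (q - p).
Proof.
  intros Hpq Hc Hd.
  set (g := fun y => f (clamp p q y)).
  assert (D : forall c, p < c < q -> derivable_pt_lim g c (df c)).
  { intros c Hc'. apply is_derive_Reals. apply is_derive_ext_loc with f.
    apply locally_clamp; auto. apply Hd; auto. }
  set (pr1 := fun c (P : p < c < q) => exist (fun l => derivable_pt_abs g c l) (df c) (D c P)).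
  set (pr2 := fun c (P : p < c < q) => derivable_pt_id c).
  destruct (MVT g id p q pr1 pr2 Hpq) as [c [P HP]].
  - intros c _. apply continuity_pt_filterlim. apply Hc.
  - intros c _. apply derivable_continuous_pt, derivable_pt_id.
  - exists c. split; auto. unfold pr1, pr2 in HP. simpl in HP.
    rewrite derive_pt_id in HP. unfold id, g in HP.
    rewrite !clamp_id in HP by lra. lra.
Qed.

Lemma FTC_CC p q (g : R -> R) : p <= q -> CC p q g ->
  forall x, is_derive (fun t => RInt (fun y => g (clamp p q y)) p t) x (g (clamp p q x)).
Proof.
  intros Hpq Hg x. apply (is_derive_RInt (V := R_CompleteNormedModule) (fun y => g (clamp p q y)) _ p x).
  - apply filter_forall. intros t. apply RInt_correct.
    apply (ex_RInt_continuous (V := R_CompleteNormedModule)). intros; apply Hg.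
  - apply Hg.
Qed.

Lemma cont_RInt_CC p q (g : R -> R) x : p <= q -> CC p q g ->
  continuous (fun t => RInt (fun y => g (clamp p q y)) p t) x.
Proof.
  intros Hpq Hg. apply (ex_derive_continuous (K := R_AbsRing) (V := R_NormedModule) (fun t => RInt (fun y => g (clamp p q y)) p t)). eexists. apply FTC_CC; auto.
Qed.

Lemma ftc_le p q (W dW g : R -> R) : p < q -> CC p q W -> CC p q g ->
  (forall x, p < x < q -> is_derive W x (dW x) /\ g x <= dW x) ->
  RInt g p q <= W q - W p.
Proof.
  intros Hpq HW Hg Hd.
  set (H := fun t => W t - RInt (fun y => g (clamp p q y)) p t).
  destruct (mvt_open p q H (fun t => dW t - g t) Hpq) as [c [Hc E]].
  - intros x. apply cont_minus. apply HW.
    apply (continuous_comp (clamp p q) (fun t => RInt (fun y => g (clamp p q y)) p t)).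
    apply clamp_cont; lra. apply cont_RInt_CC; auto; lra.
  - intros x Hx. unfold H. apply (is_derive_minus (K := R_AbsRing) (V := R_NormedModule)).
    apply Hd; auto. assert (E : g x = g (clamp p q x)) by (rewrite clamp_id; auto; lra). rewrite E.
    apply FTC_CC; auto; lra.
  - unfold H in E. rewrite RInt_point in E. rewrite RInt_clamp in E by lra.
    destruct (Hd c Hc) as [_ Hle].
    assert (0 <= (dW c - g c) * (q - p)) by (apply Rmult_le_pos; lra).
    change (@zero R_CompleteNormedModule) with 0 in E. lra.
Qed.

Lemma ftc_eq p q (W dW g : R -> R) : p < q -> CC p q W -> CC p q g ->
  (forall x, p < x < q -> is_derive W x (g x)) ->
  RInt g p q = W q - W p.
Proof.
  intros Hpq HW Hg Hd. apply Rle_antisym.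
  - apply (ftc_le p q W g g); auto. intros; split; auto; lra.
  - assert (RInt (fun x => - g x) p q <= (- W q) - (- W p)).
    { apply (ftc_le p q (fun x => - W x) (fun x => - g x)); auto.
      apply CC_opp; auto. apply CC_opp; auto.
      intros x Hx; split; [|lra]. apply (is_derive_opp (K := R_AbsRing) (V := R_NormedModule)); auto. }
    rewrite (RInt_opp (V := R_CompleteNormedModule)) in H. change (opp (RInt g p q)) with (- RInt g p q) in H. lra.
    apply CC_ex_RInt; auto; lra.
Qed.

Lemma CC_intro p q (f : R -> R) : p < q ->
  (forall x, p < x < q -> continuous f x) ->
  filterlim f (at_right p) (locally (f p)) ->
  filterlim f (at_left q) (locally (f q)) -> CC p q f.
Proof.
  intros Hpq Hi Hl Hr x.
  destruct (Rlt_or_le x p) as [Hx|Hx].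
  { apply continuous_ext_loc with (fun _ => f p). 2: apply cont_const.
    assert (H : 0 < p - x) by lra. exists (mkposreal _ H). intros y Hy.
    apply ballR in Hy; cbn [pos] in Hy. apply Rabs_def2 in Hy. unfold minus, plus, opp in Hy; simpl in Hy.
    unfold clamp, Rmax, Rmin; repeat destruct Rle_dec; try lra. }
  destruct (Rlt_or_le q x) as [Hx'|Hx'].
  { apply continuous_ext_loc with (fun _ => f q). 2: apply cont_const.
    assert (H : 0 < x - q) by lra. exists (mkposreal _ H). intros y Hy.
    apply ballR in Hy; cbn [pos] in Hy. apply Rabs_def2 in Hy. unfold minus, plus, opp in Hy; simpl in Hy.
    unfold clamp, Rmax, Rmin; repeat destruct Rle_dec; try lra. }
  destruct Hx as [Hx|Hx]; [destruct Hx' as [Hx'|Hx']|].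
  - apply continuous_ext_loc with f. 2: apply Hi; lra.
    eapply filter_imp. 2: apply (locally_interior p q x); lra.
    intros t Ht; simpl. rewrite clamp_id; auto; lra.
  - subst x. apply filterlim_locally. intros eps.
    destruct (proj1 (filterlim_locally f (f q)) Hr eps) as [d Hd].
    assert (H : 0 < Rmin d (q - p)) by (apply Rmin_pos; [apply cond_pos|lra]).
    exists (mkposreal _ H). intros y Hy.
    pose proof (Rmin_l d (q-p)); pose proof (Rmin_r d (q-p)).
    rewrite (clamp_id p q q) by lra.
    apply ballR in Hy; cbn [pos] in Hy. pose proof Hy as Hy'. apply Rabs_def2 in Hy. unfold minus, plus, opp in Hy; simpl in Hy.
    destruct (Rlt_or_le y q) as [Hyq|Hyq].
    + rewrite clamp_id by lra. apply Hd; [|lra]. apply ballR, Rabs_def1; lra.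
    + replace (clamp p q y) with q. apply ball_center.
      unfold clamp, Rmax, Rmin; repeat destruct Rle_dec; try lra.
  - subst x. apply filterlim_locally. intros eps.
    destruct (proj1 (filterlim_locally f (f p)) Hl eps) as [d Hd].
    assert (H : 0 < Rmin d (q - p)) by (apply Rmin_pos; [apply cond_pos|lra]).
    exists (mkposreal _ H). intros y Hy.
    pose proof (Rmin_l d (q-p)); pose proof (Rmin_r d (q-p)).
    rewrite (clamp_id p q p) by lra.
    apply ballR in Hy; cbn [pos] in Hy. pose proof Hy as Hy'. apply Rabs_def2 in Hy. unfold minus, plus, opp in Hy; simpl in Hy.
    destruct (Rlt_or_le p y) as [Hyq|Hyq].
    + rewrite clamp_id by lra. apply Hd; [|lra]. apply ballR, Rabs_def1; lra.
    + replace (clamp p q y) with p. apply ball_center.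
      unfold clamp, Rmax, Rmin; repeat destruct Rle_dec; try lra.
Qed.

Lemma sum_to_ext n f g : (forall i, (i < n)%nat -> f i = g i) -> sum_to n f = sum_to n g.
Proof. induction n; simpl; intros; auto. rewrite IHn by (intros; apply H; lia). rewrite H; auto. Qed.
Lemma sum_to_plus n f g : sum_to n (fun i => f i + g i) = sum_to n f + sum_to n g.
Proof. induction n; simpl; try rewrite IHn; lra. Qed.
Lemma sum_to_scal n c f : sum_to n (fun i => c * f i) = c * sum_to n f.
Proof. induction n; simpl; try rewrite IHn; lra. Qed.
Lemma sum_to_opp n f : sum_to n (fun i => - f i) = - sum_to n f.
Proof. induction n; simpl; try rewrite IHn; lra. Qed.
Lemma sum_to_minus n f g : sum_to n (fun i => f i - g i) = sum_to n f - sum_to n g.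
Proof. induction n; simpl; try rewrite IHn; lra. Qed.
Lemma sum_to_le n f g : (forall i, (i < n)%nat -> f i <= g i) -> sum_to n f <= sum_to n g.
Proof. induction n; simpl; intros; try lra. pose proof (H n ltac:(lia)). pose proof (IHn ltac:(intros; apply H; lia)). lra. Qed.
Lemma sum_to_lt n f g : (0 < n)%nat -> (forall i, (i < n)%nat -> f i < g i) -> sum_to n f < sum_to n g.
Proof.
  induction n; simpl; intros; try lia. pose proof (H0 n ltac:(lia)).
  destruct n. simpl; lra. pose proof (IHn ltac:(lia) ltac:(intros; apply H0; lia)). lra.
Qed.
Lemma sum_to_swap n k (F : nat -> nat -> R) :
  sum_to n (fun i => sum_to k (fun j => F i j)) = sum_to k (fun j => sum_to n (fun i => F i j)).
Proof.
  induction n; simpl. induction k; simpl; try rewrite <- IHk; lra.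
  rewrite IHn. rewrite <- sum_to_plus. reflexivity.
Qed.
Lemma sum_to_abs n f : Rabs (sum_to n f) <= sum_to n (fun i => Rabs (f i)).
Proof. induction n; simpl. rewrite Rabs_R0; lra. eapply Rle_trans. apply Rabs_triang. lra. Qed.

Lemma RInt_sum n (F : nat -> R -> R) p q :
  (forall j, (j < n)%nat -> ex_RInt (F j) p q) ->
  ex_RInt (fun x => sum_to n (fun j => F j x)) p q /\
  RInt (fun x => sum_to n (fun j => F j x)) p q = sum_to n (fun j => RInt (F j) p q).
Proof.
  induction n; intros H; simpl.
  - split. apply (ex_RInt_const (V := R_CompleteNormedModule)).
    rewrite (RInt_const (V := R_CompleteNormedModule)). change (scal (q - p) 0) with ((q-p) * 0). lra.
  - destruct IHn as [E1 E2]. intros; apply H; lia. split.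
    + apply (ex_RInt_plus (V := R_CompleteNormedModule) (fun x => sum_to n (fun j => F j x)) (F n)); auto.
    + rewrite (RInt_plus (V := R_CompleteNormedModule) (fun x => sum_to n (fun j => F j x)) (F n)); auto.
      rewrite E2; reflexivity.
Qed.

Lemma CC_sum p q n (F : nat -> R -> R) : (forall j, (j < n)%nat -> CC p q (F j)) ->
  CC p q (fun x => sum_to n (fun j => F j x)).
Proof.
  induction n; simpl; intros H. apply CC_const.
  apply CC_plus. apply IHn; intros; apply H; lia. apply H; lia.
Qed.

Definition CCO m (a b : nat -> R) f := forall i, (i < m)%nat -> CC (a i) (b i) f.

Lemma CC_abs p q f : CC p q f -> CC p q (fun x => Rabs (f x)).
Proof.
  intros H x. apply (continuous_comp (fun y => f (clamp p q y)) Rabs). apply H.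
  apply continuity_pt_filterlim. apply Rcontinuity_abs.
Qed.

Lemma CCO_plus m a b f g : CCO m a b f -> CCO m a b g -> CCO m a b (fun x => f x + g x).
Proof. intros H1 H2 i Hi. apply CC_plus; auto. Qed.
Lemma CCO_minus m a b f g : CCO m a b f -> CCO m a b g -> CCO m a b (fun x => f x - g x).
Proof. intros H1 H2 i Hi. apply CC_minus; auto. Qed.
Lemma CCO_mult m a b f g : CCO m a b f -> CCO m a b g -> CCO m a b (fun x => f x * g x).
Proof. intros H1 H2 i Hi. apply CC_mult; auto. Qed.
Lemma CCO_opp m a b f : CCO m a b f -> CCO m a b (fun x => - f x).
Proof. intros H1 i Hi. apply CC_opp; auto. Qed.
Lemma CCO_const m a b c : CCO m a b (fun _ => c).
Proof. intros i Hi. apply CC_const. Qed.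
Lemma CCO_abs m a b f : CCO m a b f -> CCO m a b (fun x => Rabs (f x)).
Proof. intros H1 i Hi. apply CC_abs; auto. Qed.
Lemma CCO_cont m a b f : ordered_intervals m a b -> (forall x, continuous f x) -> CCO m a b f.
Proof. intros Ho H i Hi. apply CC_cont; auto. destruct Ho as [_ [Ho _]]. pose proof (Ho i Hi); lra. Qed.
Lemma CCO_inv m a b f : ordered_intervals m a b -> CCO m a b f ->
  (forall x, inOmegaBar m a b x -> f x <> 0) -> CCO m a b (fun x => / f x).
Proof.
  intros Ho H1 H2 i Hi. destruct Ho as [_ [Ho _]]. pose proof (Ho i Hi).
  apply CC_inv; auto. lra. intros x Hx. apply H2. exists i; auto.
Qed.

Lemma ab_lt m a b i : ordered_intervals m a b -> (i < m)%nat -> a i < b i.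
Proof. intros [_ [H _]] Hi; auto. Qed.

Lemma IntOmega_ext m a b f g : ordered_intervals m a b ->
  (forall x, inOmega m a b x -> f x = g x) -> IntOmega m a b f = IntOmega m a b g.
Proof.
  intros Ho H. unfold IntOmega. apply sum_to_ext. intros i Hi.
  apply RInt_ext. intros x Hx. pose proof (ab_lt m a b i Ho Hi).
  rewrite Rmin_left in Hx by lra. rewrite Rmax_right in Hx by lra.
  apply H. exists i; auto.
Qed.

Lemma CCO_ex m a b f i : ordered_intervals m a b -> CCO m a b f -> (i < m)%nat -> ex_RInt f (a i) (b i).
Proof. intros Ho H Hi. apply CC_ex_RInt; auto. pose proof (ab_lt m a b i Ho Hi); lra. Qed.

Lemma IntOmega_plus m a b f g : ordered_intervals m a b -> CCO m a b f -> CCO m a b g ->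
  IntOmega m a b (fun x => f x + g x) = IntOmega m a b f + IntOmega m a b g.
Proof.
  intros Ho H1 H2. unfold IntOmega. rewrite <- sum_to_plus. apply sum_to_ext. intros i Hi.
  apply (RInt_plus (V := R_CompleteNormedModule) f g); apply (CCO_ex m); auto.
Qed.

Lemma IntOmega_scal m a b c f : ordered_intervals m a b -> CCO m a b f ->
  IntOmega m a b (fun x => c * f x) = c * IntOmega m a b f.
Proof.
  intros Ho H1. unfold IntOmega. rewrite <- sum_to_scal. apply sum_to_ext. intros i Hi.
  apply (RInt_scal (V := R_CompleteNormedModule) f); apply (CCO_ex m); auto.
Qed.

Lemma IntOmega_opp m a b f : ordered_intervals m a b -> CCO m a b f ->
  IntOmega m a b (fun x => - f x) = - IntOmega m a b f.
Proof.
  intros Ho H. transitivity (IntOmega m a b (fun x => (-1) * f x)).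
  apply IntOmega_ext; auto; intros; ring. rewrite IntOmega_scal; auto; ring.
Qed.

Lemma IntOmega_minus m a b f g : ordered_intervals m a b -> CCO m a b f -> CCO m a b g ->
  IntOmega m a b (fun x => f x - g x) = IntOmega m a b f - IntOmega m a b g.
Proof.
  intros Ho H1 H2. unfold Rminus. rewrite <- IntOmega_opp, <- IntOmega_plus; auto. apply CCO_opp; auto.
Qed.

Lemma IntOmega_le m a b f g : ordered_intervals m a b -> CCO m a b f -> CCO m a b g ->
  (forall x, inOmega m a b x -> f x <= g x) -> IntOmega m a b f <= IntOmega m a b g.
Proof.
  intros Ho H1 H2 H. unfold IntOmega. apply sum_to_le. intros i Hi.
  pose proof (ab_lt m a b i Ho Hi).
  apply RInt_le; try lra; try (apply (CCO_ex m); auto).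
  intros x Hx. apply H. exists i; auto.
Qed.

Lemma IntOmega_abs m a b f : ordered_intervals m a b -> CCO m a b f ->
  Rabs (IntOmega m a b f) <= IntOmega m a b (fun x => Rabs (f x)).
Proof.
  intros Ho H1. unfold IntOmega. eapply Rle_trans. apply sum_to_abs. apply sum_to_le.
  intros i Hi. pose proof (ab_lt m a b i Ho Hi). apply abs_RInt_le. lra. apply (CCO_ex m); auto.
Qed.

Lemma IntOmega_pos m a b f : ordered_intervals m a b -> CCO m a b f ->
  (forall x, inOmega m a b x -> 0 < f x) -> 0 < IntOmega m a b f.
Proof.
  intros Ho H1 H. unfold IntOmega. replace 0 with (sum_to m (fun _ => 0)).
  2:{ clear. induction m; simpl; lra. }
  apply sum_to_lt. apply Ho. intros i Hi. pose proof (ab_lt m a b i Ho Hi).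
  rewrite <- RInt_clamp by lra. apply RInt_gt_0; auto.
  intros x Hx. rewrite clamp_id by lra. apply H. exists i; auto.
  intros x _. apply H1; auto.
Qed.

Lemma IntOmega_sum m a b n (F : nat -> R -> R) : ordered_intervals m a b ->
  (forall j, (j < n)%nat -> CCO m a b (F j)) ->
  IntOmega m a b (fun x => sum_to n (fun j => F j x)) = sum_to n (fun j => IntOmega m a b (F j)).
Proof.
  intros Ho H. unfold IntOmega. rewrite sum_to_swap. apply sum_to_ext. intros i Hi.
  apply RInt_sum. intros j Hj. apply (CCO_ex m); auto.
Qed.

Definition Kc (K : R -> R) (h : R -> R) p q x := RInt (fun y => K (x - y) * h y) p q.

Lemma derK (K h : R -> R) x0 t : (forall x, ex_derive K x) ->
  is_derive (fun u => K (u - t) * h t) x0 (Derive K (x0 - t) * h t).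
Proof.
  intros H. auto_derive. apply H. change (fun x => K x) with K. unfold Rminus; ring.
Qed.

Lemma contK (K : R -> R) x : (forall x, ex_derive K x) -> continuous K x.
Proof. intros H. apply (ex_derive_continuous (K := R_AbsRing) (V := R_NormedModule) K), H. Qed.

Lemma cont2_comp_minus (F : R -> R) u v : (forall x, continuous F x) ->
  continuity_2d_pt (fun x y => F (x - y)) u v.
Proof.
  intros H. apply (continuity_1d_2d_pt_comp F (fun x y => x - y)).
  apply continuity_pt_filterlim, H.
  apply continuity_2d_pt_minus. apply continuity_2d_pt_id1. apply continuity_2d_pt_id2.
Qed.

Lemma cont2_snd (F : R -> R) u v : (forall x, continuous F x) ->
  continuity_2d_pt (fun x y => F y) u v.
Proof.
  intros H. apply (continuity_1d_2d_pt_comp F (fun x y => y)).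
  apply continuity_pt_filterlim, H. apply continuity_2d_pt_id2.
Qed.

Lemma cont2_fst (F : R -> R) u v : (forall x, continuous F x) ->
  continuity_2d_pt (fun x y => F x) u v.
Proof.
  intros H. apply (continuity_1d_2d_pt_comp F (fun x y => x)).
  apply continuity_pt_filterlim, H. apply continuity_2d_pt_id1.
Qed.

Lemma ex_RInt_cont (f : R -> R) p q : (forall x, continuous f x) -> ex_RInt f p q.
Proof. intros H. apply (ex_RInt_continuous (V := R_CompleteNormedModule)). intros; apply H. Qed.

Lemma Kc_derive (K h : R -> R) p q x : (forall x, ex_derive K x) -> (forall x, continuous (Derive K) x) ->
  (forall x, continuous h x) ->
  is_derive (Kc K h p q) x (RInt (fun y => Derive K (x - y) * h y) p q).
Proof.
  intros HKd HKc Hh. unfold Kc.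
  assert (E : forall u v, Derive (fun z => K (z - v) * h v) u = Derive K (u - v) * h v).
  { intros; apply is_derive_unique, derK; auto. }
  erewrite RInt_ext.
  2:{ intros y _. symmetry. apply (E x y). }
  apply (is_derive_RInt_param (fun u y => K (u - y) * h y)).
  - apply filter_forall. intros x0 t _. eexists; apply derK; auto.
  - intros t _. apply continuity_2d_pt_ext with (fun u v => Derive K (u - v) * h v).
    intros; rewrite E; auto.
    apply continuity_2d_pt_mult. apply cont2_comp_minus; auto. apply cont2_snd; auto.
  - apply filter_forall. intros y. apply ex_RInt_cont. intros z.
    apply cont_mult; auto. apply (continuous_comp (fun z => y - z) K).
    apply cont_minus. apply cont_const. apply cont_id. apply contK; auto.
Qed.

Lemma Kc_cont (K h : R -> R) p q x : (forall x, ex_derive K x) -> (forall x, continuous (Derive K) x) ->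
  (forall x, continuous h x) -> continuous (Kc K h p q) x.
Proof.
  intros. apply (ex_derive_continuous (K := R_AbsRing) (V := R_NormedModule)). eexists; apply Kc_derive; auto.
Qed.

Lemma FTC_cont (g : R -> R) p x : (forall x, continuous g x) ->
  is_derive (fun t => RInt g p t) x (g x).
Proof.
  intros Hg. apply (is_derive_RInt (V := R_CompleteNormedModule) g _ p x).
  - apply filter_forall. intros t. apply RInt_correct. apply ex_RInt_cont; auto.
  - apply Hg.
Qed.

Lemma const_of_deriv0 (F : R -> R) p q : (forall t, is_derive F t 0) -> F q = F p.
Proof.
  intros H. destruct (MVT_gen F p q (fun _ => 0)) as [c [_ Hc]].
  - intros; apply H.
  - intros; apply continuity_pt_filterlim.
    apply (ex_derive_continuous (K := R_AbsRing) (V := R_NormedModule) F). eexists; apply H.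
  - lra.
Qed.

Lemma fubini_K (K h1 h2 : R -> R) p q c d :
  (forall x, ex_derive K x) -> (forall x, continuous (Derive K) x) -> (forall x, K (- x) = K x) ->
  (forall x, continuous h1 x) -> (forall x, continuous h2 x) ->
  RInt (fun x => h1 x * Kc K h2 c d x) p q = RInt (fun y => h2 y * Kc K h1 p q y) c d.
Proof.
  intros HKd HKc Hev H1 H2.
  assert (Kct : forall x, continuous K x) by (intros; apply contK; auto).
  set (Phi := fun t => RInt (fun x => h1 x * Kc K h2 c d x) p t - RInt (fun y => h2 y * Kc K h1 p t y) c d).
  assert (D : forall t, is_derive Phi t 0).
  { intros t.
    assert (D1 : is_derive (fun t => RInt (fun x => h1 x * Kc K h2 c d x) p t) t (h1 t * Kc K h2 c d t)).
    { apply (FTC_cont (fun x => h1 x * Kc K h2 c d x)). intros; apply cont_mult; auto. apply Kc_cont; auto. }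
    assert (E : forall u v, Derive (fun z => h2 v * Kc K h1 p z v) u = h2 v * (K (v - u) * h1 u)).
    { intros u v. apply is_derive_unique. apply (is_derive_scal (fun z => Kc K h1 p z v)).
      unfold Kc. apply (FTC_cont (fun x => K (v - x) * h1 x)). intros; apply cont_mult; auto.
      apply (continuous_comp (fun z => v - z) K). apply cont_minus. apply cont_const. apply cont_id. auto. }
    assert (D2 : is_derive (fun t => RInt (fun y => h2 y * Kc K h1 p t y) c d) t
                   (RInt (fun y => h2 y * (K (y - t) * h1 t)) c d)).
    { erewrite RInt_ext. 2:{ intros y _. symmetry. apply (E t y). }
      apply (is_derive_RInt_param (fun u y => h2 y * Kc K h1 p u y)).
      - apply filter_forall. intros x0 y _. eexists. apply (is_derive_scal (fun z => Kc K h1 p z y)).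
        unfold Kc. apply (FTC_cont (fun x => K (y - x) * h1 x)). intros; apply cont_mult; auto.
        apply (continuous_comp (fun z => y - z) K). apply cont_minus. apply cont_const. apply cont_id. auto.
      - intros y _. apply continuity_2d_pt_ext with (fun u v => h2 v * (K (v - u) * h1 u)).
        intros; rewrite E; auto.
        apply continuity_2d_pt_mult. apply cont2_snd; auto. apply continuity_2d_pt_mult.
        apply (continuity_1d_2d_pt_comp K (fun x y => y - x)). apply continuity_pt_filterlim, Kct.
        apply continuity_2d_pt_minus. apply continuity_2d_pt_id2. apply continuity_2d_pt_id1.
        apply cont2_fst; auto.
      - apply filter_forall. intros u. apply ex_RInt_cont. intros z. apply cont_mult; auto.
        apply Kc_cont; auto. }
    assert (E2 : RInt (fun y => h2 y * (K (y - t) * h1 t)) c d = h1 t * Kc K h2 c d t).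
    { unfold Kc. rewrite <- (RInt_scal (V := R_CompleteNormedModule)).
      apply RInt_ext. intros y _. replace (y - t) with (- (t - y)) by ring. rewrite Hev.
      change (scal (h1 t) (K (t - y) * h2 y)) with (h1 t * (K (t - y) * h2 y)). change (h2 y * (K (t - y) * h1 t) = h1 t * (K (t - y) * h2 y) :> R). ring.
      apply ex_RInt_cont. intros; apply cont_mult; auto.
      apply (continuous_comp (fun z => t - z) K). apply cont_minus. apply cont_const. apply cont_id. auto. }
    rewrite E2 in D2.
    pose proof (is_derive_minus (K := R_AbsRing) (V := R_NormedModule) _ _ t _ _ D1 D2) as D3.
    unfold Phi. replace 0 with (minus (h1 t * Kc K h2 c d t) (h1 t * Kc K h2 c d t)). exact D3.
    change (h1 t * Kc K h2 c d t - h1 t * Kc K h2 c d t = 0). ring. }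
  pose proof (const_of_deriv0 Phi p q D) as HP. unfold Phi in HP.
  rewrite RInt_point in HP.
  assert (Z : RInt (fun y => h2 y * Kc K h1 p p y) c d = 0).
  { unfold Kc. transitivity (RInt (fun _ : R => 0) c d).
    apply RInt_ext. intros y _. rewrite RInt_point. change (h2 y * 0 = 0). ring.
    rewrite (RInt_const (V := R_CompleteNormedModule)). change ((d - c) * 0 = 0). ring. }
  rewrite Z in HP. change (@zero R_CompleteNormedModule) with 0 in HP. lra.
Qed.

Definition Kop (K : R -> R) m a b (f : R -> R) x := IntOmega m a b (fun y => K (x - y) * f y).
Definition E (a b : nat -> R) i (f : R -> R) := fun y => f (clamp (a i) (b i) y).

Lemma E_cont m a b i f : (i < m)%nat -> CCO m a b f -> forall x, continuous (E a b i f) x.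
Proof. intros Hi H x. apply H; auto. Qed.

Lemma E_id a b i f x : a i <= x <= b i -> E a b i f x = f x.
Proof. intros; unfold E; rewrite clamp_id; auto. Qed.

Lemma Kop_eq (K : R -> R) m a b f x : ordered_intervals m a b ->
  Kop K m a b f x = sum_to m (fun j => Kc K (E a b j f) (a j) (b j) x).
Proof.
  intros Ho. unfold Kop, IntOmega, Kc. apply sum_to_ext. intros j Hj.
  apply RInt_ext. intros y Hy. pose proof (ab_lt m a b j Ho Hj).
  rewrite Rmin_left in Hy by lra. rewrite Rmax_right in Hy by lra. rewrite E_id; auto; lra.
Qed.

Lemma cont_sum n (F : nat -> R -> R) x : (forall j, (j < n)%nat -> continuous (F j) x) ->
  continuous (fun y => sum_to n (fun j => F j y)) x.
Proof.
  induction n; simpl; intros H. apply cont_const.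
  apply cont_plus. apply IHn; intros; apply H; lia. apply H; lia.
Qed.

Lemma Kop_cont (K : R -> R) m a b f x : ordered_intervals m a b ->
  (forall x, ex_derive K x) -> (forall x, continuous (Derive K) x) ->
  CCO m a b f -> continuous (Kop K m a b f) x.
Proof.
  intros Ho HKd HKc Hf. apply continuous_ext with (fun x => sum_to m (fun j => Kc K (E a b j f) (a j) (b j) x)).
  intros; rewrite Kop_eq; auto.
  apply cont_sum. intros j Hj. apply Kc_cont; auto. apply E_cont with m; auto.
Qed.

Lemma Kop_expand (K : R -> R) m a b f g : ordered_intervals m a b ->
  (forall x, ex_derive K x) -> (forall x, continuous (Derive K) x) ->
  CCO m a b f -> CCO m a b g ->
  IntOmega m a b (fun x => f x * Kop K m a b g x) =
  sum_to m (fun i => sum_to m (fun j => RInt (fun x => E a b i f x * Kc K (E a b j g) (a j) (b j) x) (a i) (b i))).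
Proof.
  intros Ho HKd HKc Hf Hg. unfold IntOmega at 1. apply sum_to_ext. intros i Hi.
  pose proof (ab_lt m a b i Ho Hi).
  assert (Hex : forall j, (j < m)%nat -> ex_RInt (fun x => E a b i f x * Kc K (E a b j g) (a j) (b j) x) (a i) (b i)).
  { intros j Hj. apply ex_RInt_cont. intros x. apply cont_mult. apply E_cont with m; auto.
    apply Kc_cont; auto. apply E_cont with m; auto. }
  rewrite <- (proj2 (RInt_sum m (fun j x => E a b i f x * Kc K (E a b j g) (a j) (b j) x) (a i) (b i) Hex)).
  apply RInt_ext. intros x Hx. rewrite Rmin_left in Hx by lra. rewrite Rmax_right in Hx by lra.
  rewrite Kop_eq; auto. rewrite sum_to_scal. rewrite E_id; auto; lra.
Qed.

Lemma Kop_sym (K : R -> R) m a b f g : ordered_intervals m a b ->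
  (forall x, ex_derive K x) -> (forall x, continuous (Derive K) x) -> (forall x, K (- x) = K x) ->
  CCO m a b f -> CCO m a b g ->
  IntOmega m a b (fun x => f x * Kop K m a b g x) = IntOmega m a b (fun x => g x * Kop K m a b f x).
Proof.
  intros Ho HKd HKc Hev Hf Hg. rewrite !Kop_expand; auto. rewrite sum_to_swap.
  apply sum_to_ext; intros j Hj. apply sum_to_ext; intros i Hi.
  apply fubini_K; auto; apply E_cont with m; auto.
Qed.

Lemma CCO_pow2 m a b f : CCO m a b f -> CCO m a b (fun x => f x ^ 2).
Proof.
  intros H i Hi x. apply continuous_ext with (fun y => f (clamp (a i) (b i) y) * f (clamp (a i) (b i) y)).
  intros; simpl; ring. apply cont_mult; apply H; auto.
Qed.

Definition Dt (p q : R) (f : R -> R) x :=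
  if Rlt_dec p x then if Rlt_dec x q then Derive f x else 0 else 0.

Lemma Dt_eq p q f x : p < x < q -> Dt p q f x = Derive f x.
Proof. intros H. unfold Dt. destruct Rlt_dec; [destruct Rlt_dec|]; lra. Qed.

Lemma Dt_p p q f : Dt p q f p = 0.
Proof. unfold Dt. destruct Rlt_dec; lra. Qed.
Lemma Dt_q p q f : Dt p q f q = 0.
Proof. unfold Dt. destruct Rlt_dec; [destruct Rlt_dec|]; lra. Qed.

Lemma Dt_loc p q f x : p < x < q -> locally x (fun t => Derive f t = Dt p q f t).
Proof.
  intros H. eapply filter_imp. 2: apply (locally_interior p q x H).
  intros t Ht; simpl. rewrite Dt_eq; auto.
Qed.

Lemma at_right_interior p q : p < q -> at_right p (fun t => p < t < q).
Proof.
  intros H. assert (H' : 0 < q - p) by lra. exists (mkposreal _ H'). intros t Ht Hpt.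
  apply ballR in Ht; cbn [pos] in Ht. apply Rabs_def2 in Ht. unfold minus, plus, opp in Ht; simpl in Ht. lra.
Qed.
Lemma at_left_interior p q : p < q -> at_left q (fun t => p < t < q).
Proof.
  intros H. assert (H' : 0 < q - p) by lra. exists (mkposreal _ H'). intros t Ht Hpt.
  apply ballR in Ht; cbn [pos] in Ht. apply Rabs_def2 in Ht. unfold minus, plus, opp in Ht; simpl in Ht. lra.
Qed.

Lemma Dt_CC p q f : p < q ->
  (forall x, p < x < q -> ex_derive (Derive f) x) ->
  filterlim (Derive f) (at_right p) (locally 0) ->
  filterlim (Derive f) (at_left q) (locally 0) -> CC p q (Dt p q f).
Proof.
  intros Hpq Hd Hl Hr. apply CC_intro; auto.
  - intros x Hx. apply continuous_ext_loc with (Derive f).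
    eapply filter_imp. 2: apply (Dt_loc p q f x Hx). intros t Ht; simpl; auto.
    apply (ex_derive_continuous (K := R_AbsRing) (V := R_NormedModule) (Derive f)). apply Hd; auto.
  - rewrite Dt_p. apply filterlim_ext_loc with (Derive f); auto.
    eapply filter_imp. 2: apply (at_right_interior p q Hpq). intros t Ht; rewrite Dt_eq; auto.
  - rewrite Dt_q. apply filterlim_ext_loc with (Derive f); auto.
    eapply filter_imp. 2: apply (at_left_interior p q Hpq). intros t Ht; rewrite Dt_eq; auto.
Qed.

Lemma inOmega_i m a b i x : (i < m)%nat -> a i < x < b i -> inOmega m a b x.
Proof. intros; exists i; auto. Qed.

Lemma eig_CCO m a b K Rf rho th lam psi : ordered_intervals m a b ->
  principal_eigenpair m a b K Rf rho th lam psi -> CCO m a b psi.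
Proof.
  intros Ho [Hd [Hbd _]] i Hi. pose proof (ab_lt m a b i Ho Hi).
  destruct (Hbd i Hi) as [H1 [H2 _]].
  apply CC_intro; auto. intros x Hx.
  apply (ex_derive_continuous (K := R_AbsRing) (V := R_NormedModule) psi).
  apply (Hd x (inOmega_i m a b i x Hi Hx)).
Qed.

Lemma eig_DtCC m a b K Rf rho th lam psi i : ordered_intervals m a b -> (i < m)%nat ->
  principal_eigenpair m a b K Rf rho th lam psi -> CC (a i) (b i) (Dt (a i) (b i) psi).
Proof.
  intros Ho Hi [Hd [Hbd _]]. pose proof (ab_lt m a b i Ho Hi).
  destruct (Hbd i Hi) as [_ [_ [H3 H4]]].
  apply Dt_CC; auto. intros x Hx. apply (Hd x (inOmega_i m a b i x Hi Hx)).
Qed.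

Lemma cont_Kshift (K : R -> R) x z : (forall x, ex_derive K x) -> continuous (fun y => K (x - y)) z.
Proof.
  intros HKd. apply (continuous_comp (fun y => x - y) K).
  apply cont_minus. apply cont_const. apply cont_id. apply contK; auto.
Qed.

Lemma CCO_Kop (K : R -> R) m a b f : ordered_intervals m a b ->
  (forall x, ex_derive K x) -> (forall x, continuous (Derive K) x) ->
  CCO m a b f -> CCO m a b (Kop K m a b f).
Proof. intros. apply CCO_cont; auto. intros; apply Kop_cont; auto. Qed.

Lemma CCO_Kshift (K : R -> R) m a b x : ordered_intervals m a b ->
  (forall x, ex_derive K x) -> CCO m a b (fun y => K (x - y)).
Proof. intros. apply CCO_cont; auto. intros; apply cont_Kshift; auto. Qed.

Ltac cco_step := match goal with
 | |- CCO _ _ _ (fun _ => ?c) => apply CCO_const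
 | |- CCO _ _ _ (fun _ => _ + _) => apply CCO_plus
 | |- CCO _ _ _ (fun _ => _ - _) => apply CCO_minus
 | |- CCO _ _ _ (fun _ => _ * _) => apply CCO_mult
 | |- CCO _ _ _ (fun _ => - _) => apply CCO_opp
 | |- CCO _ _ _ (fun _ => Rabs _) => apply CCO_abs
 | |- CCO _ _ _ (fun _ => _ ^ 2) => apply CCO_pow2
 | |- CCO _ _ _ (fun _ => / _) => apply CCO_inv
 | |- CCO _ _ _ (fun _ => Kop _ _ _ _ _ _) => apply CCO_Kop
 | |- CCO _ _ _ (Kop _ _ _ _ _) => apply CCO_Kop
 | |- CCO _ _ _ (fun y => _ (_ - y)) => apply CCO_Kshift
 | |- CCO _ _ _ (fun _ => _) => apply CCO_const
 end.
Ltac cco := repeat (first [assumption | cco_step]).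

Lemma Lop_dec m a b (K f : R -> R) x : ordered_intervals m a b ->
  (forall x, ex_derive K x) -> CCO m a b f ->
  Lop m a b K f x = f x * Kop K m a b (fun _ => 1) x - Kop K m a b f x.
Proof.
  intros Ho HKd Hf. unfold Lop, Kop.
  transitivity (IntOmega m a b (fun y => f x * (K (x - y) * 1) - K (x - y) * f y)).
  apply IntOmega_ext; auto; intros; ring.
  rewrite IntOmega_minus; auto. rewrite IntOmega_scal; auto.
  all: cco.
Qed.

Lemma eig_D2 m a b K Rf rho th lam psi x : principal_eigenpair m a b K Rf rho th lam psi ->
  inOmega m a b x ->
  Derive (Derive psi) x = Lop m a b K psi x - (Rf x th - rho x) * psi x - lam * psi x.
Proof. intros [_ [_ [He _]]] Hx. specialize (He x Hx). lra. Qed.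

Definition Gf (K : R -> R) m a b (R1 R2 : R -> R) (dl : R) (psi phi : R -> R) x :=
  phi x * Kop K m a b psi x - psi x * Kop K m a b phi x - (R2 x - R1 x) * phi x * psi x - dl * phi x * psi x.

Lemma G_eq m a b (K rho : R -> R) (Rf : R -> R -> R) th th' lam lam' psi phi x :
  ordered_intervals m a b -> (forall x, ex_derive K x) ->
  principal_eigenpair m a b K Rf rho th lam psi ->
  principal_eigenpair m a b K Rf rho th' lam' phi -> inOmega m a b x ->
  Derive (Derive phi) x * psi x - Derive (Derive psi) x * phi x =
  Gf K m a b (fun x => Rf x th) (fun x => Rf x th') (lam' - lam) psi phi x.
Proof.
  intros Ho HKd Hp Hf Hx.
  rewrite (eig_D2 m a b K Rf rho th lam psi x Hp Hx), (eig_D2 m a b K Rf rho th' lam' phi x Hf Hx).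
  rewrite !(Lop_dec m a b K _ x Ho HKd) by (eapply eig_CCO; eauto).
  unfold Gf. ring.
Qed.

Lemma W_derive m a b (K rho : R -> R) (Rf : R -> R -> R) th th' lam lam' psi phi i x :
  ordered_intervals m a b -> (forall x, ex_derive K x) -> (i < m)%nat ->
  principal_eigenpair m a b K Rf rho th lam psi ->
  principal_eigenpair m a b K Rf rho th' lam' phi -> a i < x < b i ->
  is_derive (fun x => Dt (a i) (b i) phi x * psi x - Dt (a i) (b i) psi x * phi x) x
     (Gf K m a b (fun x => Rf x th) (fun x => Rf x th') (lam' - lam) psi phi x).
Proof.
  intros Ho HKd Hi Hp Hf Hx.
  assert (Hx' : inOmega m a b x) by (exists i; auto).
  rewrite <- (G_eq m a b K rho Rf th th' lam lam' psi phi x); auto.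
  apply is_derive_ext_loc with (fun x => Derive phi x * psi x - Derive psi x * phi x).
  - eapply filter_imp. 2: apply (filter_and _ _ (Dt_loc (a i) (b i) phi x Hx) (Dt_loc (a i) (b i) psi x Hx)).
    intros t [E1 E2]; simpl. rewrite E1, E2; auto.
  - destruct Hp as [Hdp _]. destruct Hf as [Hdf _].
    destruct (Hdp x Hx') as [P1 P2]. destruct (Hdf x Hx') as [F1 F2].
    auto_derive; auto. change (fun x : R => Derive phi x) with (Derive phi). change (fun x : R => Derive psi x) with (Derive psi). change (fun x : R => psi x) with psi. change (fun x : R => phi x) with phi. ring.
Qed.

Lemma pair_I1 m a b (K rho : R -> R) (Rf : R -> R -> R) th th' lam lam' psi phi :
  ordered_intervals m a b -> (forall x, ex_derive K x) -> (forall x, continuous (Derive K) x) ->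
  (forall x, K (- x) = K x) ->
  principal_eigenpair m a b K Rf rho th lam psi ->
  principal_eigenpair m a b K Rf rho th' lam' phi ->
  CCO m a b (fun x => Rf x th) -> CCO m a b (fun x => Rf x th') ->
  IntOmega m a b (fun x => (Rf x th' - Rf x th) * phi x * psi x) +
  (lam' - lam) * IntOmega m a b (fun x => phi x * psi x) = 0.
Proof.
  intros Ho HKd HKc Hev Hp Hf HR1 HR2.
  pose proof (eig_CCO _ _ _ _ _ _ _ _ _ Ho Hp) as Cp.
  pose proof (eig_CCO _ _ _ _ _ _ _ _ _ Ho Hf) as Cf.
  assert (IG : IntOmega m a b (Gf K m a b (fun x => Rf x th) (fun x => Rf x th') (lam' - lam) psi phi) = 0).
  { unfold IntOmega. transitivity (sum_to m (fun _ => 0)). 2:{ clear. induction m; simpl; lra. }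
    apply sum_to_ext. intros i Hi. pose proof (ab_lt m a b i Ho Hi).
    rewrite (ftc_eq (a i) (b i) (fun x => Dt (a i) (b i) phi x * psi x - Dt (a i) (b i) psi x * phi x)
       (Gf K m a b (fun x => Rf x th) (fun x => Rf x th') (lam' - lam) psi phi)); auto.
    - rewrite !Dt_p, !Dt_q. ring.
    - apply CC_minus; apply CC_mult; auto; eapply eig_DtCC; eauto.
    - unfold Gf. assert (CCO m a b (Gf K m a b (fun x => Rf x th) (fun x => Rf x th') (lam' - lam) psi phi)).
      { unfold Gf. cco. }
      apply H0; auto.
    - intros x Hx. eapply W_derive; eauto. }
  unfold Gf in IG.
  rewrite !IntOmega_minus in IG by cco.
  rewrite (Kop_sym K m a b phi psi) in IG; auto.
  assert (E : IntOmega m a b (fun x => (lam' - lam) * phi x * psi x) = IntOmega m a b (fun x => (lam' - lam) * (phi x * psi x))).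
  { apply IntOmega_ext; auto. intros; ring. }
  rewrite E, IntOmega_scal in IG by cco. lra.
Qed.


Lemma pointwise_gap (Kv P D cK M : R) : cK <= Kv -> 0 < cK -> 0 < P -> P <= M ^ 2 -> 0 <= D -> 0 < M ->
  cK / M ^ 2 * (P ^ 2 * D) <= Kv * (P * D).
Proof.
  intros H1 H2 H3 H4 H5 H6.
  assert (HM : 0 < M ^ 2) by (apply pow_lt; auto).
  assert (E : cK / M ^ 2 * (P ^ 2 * D) = cK * (P * D) * (P / M ^ 2)) by (field; lra).
  rewrite E. assert (Hq : P / M ^ 2 <= 1). { apply Rmult_le_reg_r with (M ^ 2); auto. unfold Rdiv. rewrite Rmult_assoc, Rinv_l by lra. lra. }
  assert (Hq0 : 0 <= P / M ^ 2) by (apply Rlt_le, Rdiv_lt_0_compat; lra).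
  assert (HPD : 0 <= P * D) by (apply Rmult_le_pos; lra).
  apply Rle_trans with (cK * (P * D)).
  - rewrite <- (Rmult_1_r (cK * (P * D))) at 2. apply Rmult_le_compat_l; auto. apply Rmult_le_pos; lra.
  - apply Rmult_le_compat_r; auto.
Qed.

Lemma nonlocal_gap m a b (K : R -> R) cK M psi w u :
  ordered_intervals m a b -> (forall x, ex_derive K x) -> (forall x, continuous (Derive K) x) ->
  (forall x, K (- x) = K x) -> (forall x, cK <= K x) -> 0 < cK -> 0 < M ->
  CCO m a b psi -> CCO m a b w -> CCO m a b u ->
  (forall x, inOmega m a b x -> 0 < psi x <= M) ->
  (forall x, inOmega m a b x -> u x = w x * psi x) ->
  cK / M ^ 2 * (IntOmega m a b (fun x => u x ^ 2) * IntOmega m a b (fun x => psi x ^ 2)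
                - IntOmega m a b (fun x => u x * psi x) ^ 2)
  <= IntOmega m a b (fun x => w x * u x * Kop K m a b psi x) - IntOmega m a b (fun x => u x * Kop K m a b u x).
Proof.
  intros Ho HKd HKc Hev HcK HcK0 HM Cp Cw Cu Hp Hu.
  set (Nu := IntOmega m a b (fun x => u x ^ 2)).
  set (Np := IntOmega m a b (fun x => psi x ^ 2)).
  set (Iup := IntOmega m a b (fun x => u x * psi x)).
  set (c0 := cK / M ^ 2).
  assert (Hsym := Kop_sym K m a b (fun x => w x * u x) psi Ho HKd HKc Hev ltac:(cco) Cp).
  assert (L : forall x, w x * u x * Kop K m a b psi x + psi x * Kop K m a b (fun y => w y * u y) x
                   - 2 * (u x * Kop K m a b u x)
            = IntOmega m a b (fun y => K (x - y) * (w x * u x * psi y + psi x * (w y * u y) - 2 * (u x * u y)))).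
  { intros x. unfold Kop. symmetry.
    transitivity (IntOmega m a b (fun y => (w x * u x) * (K (x - y) * psi y) + psi x * (K (x - y) * (w y * u y))
                     - (2 * u x) * (K (x - y) * u y))).
    apply IntOmega_ext; auto; intros; ring.
    rewrite IntOmega_minus, IntOmega_plus by cco. rewrite !IntOmega_scal by cco. ring. }
  assert (Rr : forall x, c0 * (u x ^ 2 * Np - 2 * (u x * psi x) * Iup + psi x ^ 2 * Nu)
            = IntOmega m a b (fun y => c0 * (u x * psi y - psi x * u y) ^ 2)).
  { intros x. symmetry.
    transitivity (IntOmega m a b (fun y => (c0 * u x ^ 2) * (psi y ^ 2) - (2 * c0 * u x * psi x) * (u y * psi y)
                     + (c0 * psi x ^ 2) * (u y ^ 2))).
    apply IntOmega_ext; auto; intros; ring.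
    rewrite IntOmega_plus, IntOmega_minus by cco. rewrite !IntOmega_scal by cco. unfold Np, Iup, Nu. ring. }
  assert (Pt : forall x, inOmega m a b x ->
     c0 * (u x ^ 2 * Np - 2 * (u x * psi x) * Iup + psi x ^ 2 * Nu) <=
     w x * u x * Kop K m a b psi x + psi x * Kop K m a b (fun y => w y * u y) x - 2 * (u x * Kop K m a b u x)).
  { intros x Hx. rewrite L, Rr. apply IntOmega_le; auto. cco. cco.
    intros y Hy. rewrite (Hu x Hx), (Hu y Hy).
    destruct (Hp x Hx) as [P1 P2]. destruct (Hp y Hy) as [P3 P4].
    replace (c0 * (w x * psi x * psi y - psi x * (w y * psi y)) ^ 2)
      with (cK / M ^ 2 * ((psi x * psi y) ^ 2 * (w x - w y) ^ 2)) by (unfold c0; ring).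
    replace (K (x - y) * (w x * (w x * psi x) * psi y + psi x * (w y * (w y * psi y)) - 2 * (w x * psi x * (w y * psi y))))
      with (K (x - y) * ((psi x * psi y) * (w x - w y) ^ 2)) by ring.
    apply pointwise_gap; auto. apply Rmult_lt_0_compat; lra.
    replace (M ^ 2) with (M * M) by ring. apply Rmult_le_compat; lra.
    apply pow2_ge_0. }
  assert (I : IntOmega m a b (fun x => c0 * (u x ^ 2 * Np - 2 * (u x * psi x) * Iup + psi x ^ 2 * Nu)) <=
     IntOmega m a b (fun x => w x * u x * Kop K m a b psi x + psi x * Kop K m a b (fun y => w y * u y) x - 2 * (u x * Kop K m a b u x))).
  { apply IntOmega_le; auto; cco. }
  assert (E0 : IntOmega m a b (fun x => c0 * (u x ^ 2 * Np - 2 * (u x * psi x) * Iup + psi x ^ 2 * Nu))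
     = c0 * (Nu * Np - 2 * Iup ^ 2 + Np * Nu)).
  { transitivity (IntOmega m a b (fun x => (c0 * Np) * u x ^ 2 - (2 * c0 * Iup) * (u x * psi x) + (c0 * Nu) * psi x ^ 2)).
    apply IntOmega_ext; auto; intros; ring.
    rewrite IntOmega_plus, IntOmega_minus by cco. rewrite !IntOmega_scal by cco. unfold Nu, Np, Iup. ring. }
  rewrite E0 in I.
  rewrite IntOmega_minus, IntOmega_plus in I by cco.
  rewrite (IntOmega_scal m a b 2 (fun x => u x * Kop K m a b u x)) in I by cco.
  rewrite <- Hsym in I. unfold c0 in *. unfold Nu, Np, Iup in *. lra.
Qed.

Definition dVf (phi psi : R -> R) c x :=
  let u := phi x - c * psi x in
  let D1f := Derive phi x in let D1p := Derive psi x in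
  let D2f := Derive (Derive phi) x in let D2p := Derive (Derive psi) x in
  (D2f - c * D2p) * u + (D1f - c * D1p) ^ 2 - D2p * u ^ 2 / psi x
  - 2 * D1p * (D1f - c * D1p) * u / psi x + D1p ^ 2 * u ^ 2 / psi x ^ 2.

Lemma V_derive (phi psi : R -> R) c p q x : p < x < q ->
  ex_derive phi x -> ex_derive psi x -> ex_derive (Derive phi) x -> ex_derive (Derive psi) x -> psi x <> 0 ->
  is_derive (fun x => (Dt p q phi x - c * Dt p q psi x) * (phi x - c * psi x)
                      - Dt p q psi x * (phi x - c * psi x) ^ 2 / psi x) x (dVf phi psi c x).
Proof.
  intros Hx H1 H2 H3 H4 H5.
  apply is_derive_ext_loc with (fun x => (Derive phi x - c * Derive psi x) * (phi x - c * psi x)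
                      - Derive psi x * (phi x - c * psi x) ^ 2 / psi x).
  - eapply filter_imp. 2: apply (filter_and _ _ (Dt_loc p q phi x Hx) (Dt_loc p q psi x Hx)).
    intros t [E1 E2]; simpl. rewrite E1, E2; auto.
  - auto_derive. repeat split; auto.
    change (fun x : R => Derive phi x) with (Derive phi). change (fun x : R => Derive psi x) with (Derive psi).
    change (fun x : R => psi x) with psi. change (fun x : R => phi x) with phi.
    unfold dVf. field; auto.
Qed.

Lemma dV_ge (phi psi : R -> R) c x : psi x <> 0 ->
  (phi x - c * psi x) / psi x * (Derive (Derive phi) x * psi x - Derive (Derive psi) x * phi x) <= dVf phi psi c x.
Proof.
  intros H. unfold dVf.
  set (u := phi x - c * psi x). set (D1f := Derive phi x). set (D1p := Derive psi x).
  set (D2f := Derive (Derive phi) x). set (D2p := Derive (Derive psi) x).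
  assert (E : (D2f - c * D2p) * u + (D1f - c * D1p) ^ 2 - D2p * u ^ 2 / psi x
     - 2 * D1p * (D1f - c * D1p) * u / psi x + D1p ^ 2 * u ^ 2 / psi x ^ 2
     - u / psi x * (D2f * psi x - D2p * phi x) = (D1f - c * D1p - u * D1p / psi x) ^ 2).
  { unfold u. field; auto. }
  pose proof (pow2_ge_0 (D1f - c * D1p - u * D1p / psi x)). lra.
Qed.

Lemma pair_gap m a b (K rho : R -> R) (Rf : R -> R -> R) th th' lam lam' psi phi :
  ordered_intervals m a b -> (forall x, ex_derive K x) -> (forall x, continuous (Derive K) x) ->
  principal_eigenpair m a b K Rf rho th lam psi ->
  principal_eigenpair m a b K Rf rho th' lam' phi ->
  CCO m a b (fun x => Rf x th) -> CCO m a b (fun x => Rf x th') ->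
  (forall x, inOmegaBar m a b x -> psi x <> 0) ->
  forall c,
  IntOmega m a b (fun x => (phi x - c * psi x) / psi x *
     Gf K m a b (fun x => Rf x th) (fun x => Rf x th') (lam' - lam) psi phi x) <= 0.
Proof.
  intros Ho HKd HKc Hp Hf HR1 HR2 Hnz c.
  pose proof (eig_CCO _ _ _ _ _ _ _ _ _ Ho Hp) as Cp.
  pose proof (eig_CCO _ _ _ _ _ _ _ _ _ Ho Hf) as Cf.
  assert (Cg : CCO m a b (fun x => (phi x - c * psi x) / psi x *
     Gf K m a b (fun x => Rf x th) (fun x => Rf x th') (lam' - lam) psi phi x)).
  { unfold Rdiv, Gf. cco. }
  assert (Cu : CCO m a b (fun x => phi x - c * psi x)) by cco.
  assert (Cu2 : CCO m a b (fun x => (phi x - c * psi x) ^ 2)) by cco.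
  assert (Ci : CCO m a b (fun x => / psi x)) by cco.
  unfold IntOmega. transitivity (sum_to m (fun _ => 0)). 2:{ clear. induction m; simpl; lra. }
  apply sum_to_le. intros i Hi. pose proof (ab_lt m a b i Ho Hi).
  pose proof (eig_DtCC _ _ _ _ _ _ _ _ _ i Ho Hi Hp) as Dp.
  pose proof (eig_DtCC _ _ _ _ _ _ _ _ _ i Ho Hi Hf) as Df.
  eapply Rle_trans.
  apply (ftc_le (a i) (b i) (fun x => (Dt (a i) (b i) phi x - c * Dt (a i) (b i) psi x) * (phi x - c * psi x)
                      - Dt (a i) (b i) psi x * (phi x - c * psi x) ^ 2 / psi x) (dVf phi psi c)); auto.
  - unfold Rdiv. apply CC_minus. apply CC_mult. apply CC_minus; auto. apply CC_mult; auto. apply CC_const.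
    apply Cu; auto. apply CC_mult. apply CC_mult; auto. all: try apply Ci; try apply Cu2; auto.
  - intros x Hx. assert (Hx' : inOmega m a b x) by (exists i; auto).
    assert (Hpx : psi x <> 0) by (apply Hnz; exists i; split; auto; lra).
    pose proof Hp as [Hdp _]. pose proof Hf as [Hdf _].
    destruct (Hdp x Hx') as [P1 P2]. destruct (Hdf x Hx') as [F1 F2].
    split. apply V_derive; auto.
    rewrite <- (G_eq m a b K rho Rf th th' lam lam' psi phi x); auto. apply dV_ge; auto.
  - rewrite !Dt_p, !Dt_q. lra.
Qed.

Lemma gap_result m a b (K rho : R -> R) (Rf : R -> R -> R) th th' lam lam' psi phi cK M s :
  ordered_intervals m a b -> (forall x, ex_derive K x) -> (forall x, continuous (Derive K) x) ->
  (forall x, K (- x) = K x) -> (forall x, cK <= K x) -> 0 < cK -> 0 < M ->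
  principal_eigenpair m a b K Rf rho th lam psi ->
  principal_eigenpair m a b K Rf rho th' lam' phi ->
  L2_normalized m a b psi -> L2_normalized m a b phi ->
  CCO m a b (fun x => Rf x th) -> CCO m a b (fun x => Rf x th') ->
  (forall x, inOmegaBar m a b x -> psi x <> 0) ->
  (forall x, inOmega m a b x -> 0 < psi x <= M) ->
  (forall x, inOmega m a b x -> Rabs (Rf x th' - Rf x th) <= s) -> 0 <= s ->
  cK / M ^ 2 * (1 - IntOmega m a b (fun x => phi x * psi x) ^ 2) <= s + Rabs (lam' - lam).
Proof.
  intros Ho HKd HKc Hev HcK HcK0 HM Hp Hf Np Nf HR1 HR2 Hnz Hpos Hs Hs0.
  pose proof (eig_CCO _ _ _ _ _ _ _ _ _ Ho Hp) as Cp.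
  pose proof (eig_CCO _ _ _ _ _ _ _ _ _ Ho Hf) as Cf.
  set (c := IntOmega m a b (fun x => phi x * psi x)).
  set (u := fun x => phi x - c * psi x).
  set (w := fun x => u x / psi x).
  set (dl := lam' - lam).
  assert (Cu : CCO m a b u) by (unfold u; cco).
  assert (Cw : CCO m a b w) by (unfold w, u, Rdiv; cco).
  pose proof (pair_gap m a b K rho Rf th th' lam lam' psi phi Ho HKd HKc Hp Hf HR1 HR2 Hnz c) as PG.
  unfold L2_normalized in Np, Nf.
  assert (Nu : IntOmega m a b (fun x => u x ^ 2) = 1 - c ^ 2).
  { transitivity (IntOmega m a b (fun x => phi x ^ 2 - (2 * c) * (phi x * psi x) + c ^ 2 * psi x ^ 2)).
    apply IntOmega_ext; auto; intros; unfold u; ring.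
    rewrite IntOmega_plus, IntOmega_minus by cco. rewrite !IntOmega_scal by cco.
    rewrite Np, Nf. fold c. ring. }
  assert (Iup : IntOmega m a b (fun x => u x * psi x) = 0).
  { transitivity (IntOmega m a b (fun x => phi x * psi x - c * psi x ^ 2)).
    apply IntOmega_ext; auto; intros; unfold u; ring.
    rewrite IntOmega_minus by cco. rewrite IntOmega_scal by cco. rewrite Np. fold c. ring. }
  pose proof (nonlocal_gap m a b K cK M psi w u Ho HKd HKc Hev HcK HcK0 HM Cp Cw Cu Hpos) as NG.
  assert (Huw : forall x, inOmega m a b x -> u x = w x * psi x).
  { intros x Hx. unfold w. field. destruct (Hpos x Hx); lra. }
  specialize (NG Huw). rewrite Nu, Iup, Np in NG.
  assert (Kphi : forall x, Kop K m a b phi x = Kop K m a b u x + c * Kop K m a b psi x).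
  { intros x. unfold Kop. rewrite <- IntOmega_scal by cco. rewrite <- IntOmega_plus by cco.
    apply IntOmega_ext; auto. intros; unfold u; ring. }
  assert (EG : IntOmega m a b (fun x => u x / psi x *
     Gf K m a b (fun x => Rf x th) (fun x => Rf x th') (lam' - lam) psi phi x)
     = IntOmega m a b (fun x => w x * u x * Kop K m a b psi x) - IntOmega m a b (fun x => u x * Kop K m a b u x)
       - IntOmega m a b (fun x => u x * phi x * ((Rf x th' - Rf x th) + dl))).
  { rewrite <- !IntOmega_minus by (unfold w, u, Rdiv; cco).
    apply IntOmega_ext; auto. intros x Hx. unfold Gf. rewrite Kphi. unfold w, dl.
    unfold u. field. destruct (Hpos x Hx); lra. }
  change (fun x => (phi x - c * psi x) / psi x *
     Gf K m a b (fun x => Rf x th) (fun x => Rf x th') (lam' - lam) psi phi x) with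
     (fun x => u x / psi x * Gf K m a b (fun x => Rf x th) (fun x => Rf x th') (lam' - lam) psi phi x) in PG.
  rewrite EG in PG.
  assert (B : IntOmega m a b (fun x => u x * phi x * ((Rf x th' - Rf x th) + dl)) <=
              IntOmega m a b (fun x => (s + Rabs dl) / 2 * (u x ^ 2 + phi x ^ 2))).
  { apply IntOmega_le; auto. cco. cco. intros x Hx.
    specialize (Hs x Hx).
    assert (Habs : Rabs ((Rf x th' - Rf x th) + dl) <= s + Rabs dl).
    { eapply Rle_trans. apply Rabs_triang. lra. }
    assert (H1 : u x * phi x * ((Rf x th' - Rf x th) + dl) <= Rabs (u x * phi x) * (s + Rabs dl)).
    { eapply Rle_trans. apply Rle_abs. rewrite Rabs_mult. apply Rmult_le_compat_l; auto. apply Rabs_pos. }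
    assert (H2 : Rabs (u x * phi x) <= (u x ^ 2 + phi x ^ 2) / 2).
    { rewrite Rabs_mult. pose proof (pow2_ge_0 (Rabs (u x) - Rabs (phi x))).
      rewrite <- (pow2_abs (u x)), <- (pow2_abs (phi x)). nra. }
    assert (0 <= s + Rabs dl) by (pose proof (Rabs_pos dl); pose proof (Rabs_pos (Rf x th' - Rf x th)); lra).
    nra. }
  rewrite IntOmega_scal, IntOmega_plus, Nu, Nf in B by cco.
  assert (0 <= c ^ 2) by apply pow2_ge_0.
  assert (0 <= s + Rabs dl) by (pose proof (Rabs_pos dl); lra).
  fold c. fold dl. nra.
Qed.

Lemma finite_max m (P : nat -> R -> Prop) :
  (forall i, (i < m)%nat -> exists M, P i M) ->
  (forall i M M', P i M -> M <= M' -> P i M') -> exists M, forall i, (i < m)%nat -> P i M.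
Proof.
  intros H Hm. induction m.
  - exists 0. intros; lia.
  - destruct IHm as [M1 HM1]. intros; apply H; lia.
    destruct (H m ltac:(lia)) as [M2 HM2].
    exists (Rmax M1 M2). intros i Hi. destruct (Nat.eq_dec i m).
    + subst. apply Hm with M2; auto. apply Rmax_r.
    + apply Hm with M1. apply HM1; lia. apply Rmax_l.
Qed.

Lemma finite_min m (Q : nat -> R -> Prop) :
  (forall i, (i < m)%nat -> exists d, 0 < d /\ Q i d) ->
  (forall i d d', Q i d -> 0 < d' <= d -> Q i d') -> exists d, 0 < d /\ forall i, (i < m)%nat -> Q i d.
Proof.
  intros H Hm. induction m.
  - exists 1. split. lra. intros; lia.
  - destruct IHm as [d1 [Hd1 HM1]]. intros; apply H; lia.
    destruct (H m ltac:(lia)) as [d2 [Hd2 HM2]].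
    exists (Rmin d1 d2). split. apply Rmin_pos; auto. intros i Hi. destruct (Nat.eq_dec i m).
    + subst. apply Hm with d2; auto. split. apply Rmin_pos; auto. apply Rmin_r.
    + apply Hm with d1. apply HM1; lia. split. apply Rmin_pos; auto. apply Rmin_l.
Qed.

Lemma psi_bound m a b psi : ordered_intervals m a b -> CCO m a b psi ->
  exists M, 0 < M /\ forall x, inOmega m a b x -> psi x <= M.
Proof.
  intros Ho Hc.
  destruct (finite_max m (fun i M => forall x, a i <= x <= b i -> psi x <= M)) as [M HM].
  - intros i Hi. pose proof (ab_lt m a b i Ho Hi).
    destruct (continuity_ab_maj (fun y => psi (clamp (a i) (b i) y)) (a i) (b i)) as [Mx [HMx _]].
    lra. intros c _. apply continuity_pt_filterlim. apply Hc; auto.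
    exists (psi (clamp (a i) (b i) Mx)). intros x Hx. specialize (HMx x Hx). simpl in HMx.
    rewrite clamp_id in HMx; auto.
  - intros i M0 M' H1 H2 x Hx. specialize (H1 x Hx). lra.
  - exists (Rmax M 1). split. apply Rlt_le_trans with 1. lra. apply Rmax_r.
    intros x [i [Hi Hx]]. eapply Rle_trans. apply (HM i Hi x). lra. apply Rmax_l.
Qed.

Lemma cont2_clamp m a b A (g : R -> R -> R) i th : ordered_intervals m a b -> (i < m)%nat -> - A < th < A ->
  cont_on2 (closedDom m a b A) g ->
  forall x, continuity_2d_pt (fun u v => g (clamp (a i) (b i) u) v) x th.
Proof.
  intros Ho Hi Hth Hg x eps. pose proof (ab_lt m a b i Ho Hi).
  assert (Dp : closedDom m a b A (clamp (a i) (b i) x, th)).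
  { split. exists i. split; auto. apply clamp_in; lra. simpl; lra. }
  pose proof (Hg _ Dp) as F.
  destruct (proj1 (filterlim_locally _ _) F eps) as [d Hd].
  assert (Hd0 : 0 < Rmin d (A - Rabs th)).
  { apply Rmin_pos. apply cond_pos. unfold Rabs; destruct Rcase_abs; lra. }
  exists (mkposreal _ Hd0). intros u v Hu Hv. simpl in Hu, Hv.
  pose proof (Rmin_l d (A - Rabs th)). pose proof (Rmin_r d (A - Rabs th)).
  specialize (Hd (clamp (a i) (b i) u, v)). simpl in Hd.
  apply Hd.
  - split; simpl.
    + apply ballR. eapply Rle_lt_trans. rewrite <- (Rmult_1_l (Rabs (clamp (a i) (b i) u - clamp (a i) (b i) x))) at 1.
      rewrite Rmult_1_l. apply (clamp_lip (a i) (b i) x u). lra. lra.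
    + apply ballR. lra.
  - split. exists i. split; auto. apply clamp_in; lra. simpl.
    apply Rabs_def2 in Hv. unfold Rabs in *; destruct Rcase_abs; lra.
Qed.

Lemma cont2_to_1 (F : R -> R -> R) x th : continuity_2d_pt F x th -> continuous (fun u => F u th) x.
Proof.
  intros H. apply filterlim_locally. intros eps. destruct (H eps) as [d Hd].
  exists d. intros y Hy. apply ballR. apply Hd. apply Hy. rewrite Rminus_diag, Rabs_R0. apply cond_pos.
Qed.

Lemma cont2_CCO m a b A (g : R -> R -> R) th : ordered_intervals m a b -> - A < th < A ->
  cont_on2 (closedDom m a b A) g -> CCO m a b (fun x => g x th).
Proof.
  intros Ho Hth Hg i Hi x. apply (cont2_to_1 (fun u v => g (clamp (a i) (b i) u) v)).
  eapply cont2_clamp; eauto.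
Qed.

Lemma unif_cont m a b A (g : R -> R -> R) th : ordered_intervals m a b -> - A < th < A ->
  cont_on2 (closedDom m a b A) g -> forall eps, 0 < eps ->
  exists d, 0 < d /\ forall x v, inOmega m a b x -> Rabs (v - th) <= d -> Rabs (g x v - g x th) < eps.
Proof.
  intros Ho Hth Hg eps Heps.
  destruct (finite_min m (fun i d => forall x v, a i < x < b i -> Rabs (v - th) <= d -> Rabs (g x v - g x th) < eps)) as [d [Hd HQ]].
  - intros i Hi. pose proof (ab_lt m a b i Ho Hi).
    destruct (uniform_continuity_2d_1d (fun u v => g (clamp (a i) (b i) u) v) (a i) (b i) th) with (mkposreal _ Heps) as [d Hd].
    intros x _. eapply cont2_clamp; eauto.
    exists d. split. apply cond_pos. intros x v Hx Hv.
    specialize (Hd x th x v). simpl in Hd. rewrite !clamp_id in Hd by lra.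
    pose proof (cond_pos d).
    apply Hd; try lra; try (revert Hv; unfold Rabs; destruct Rcase_abs; intros; lra).
    replace (x - x) with 0 by ring. rewrite Rabs_R0. apply cond_pos.
  - intros i d0 d' H1 H2 x v Hx Hv. apply H1; auto. lra.
  - exists d. split; auto. intros x v [i [Hi Hx]] Hv. apply (HQ i Hi); auto.
Qed.

Lemma D2_bound m a b (K rho : R -> R) (Rf : R -> R -> R) th lam psi cK CK C1 Mr :
  ordered_intervals m a b -> (forall x, ex_derive K x) ->
  (forall x, cK <= K x) -> (forall x, K x <= CK) ->
  principal_eigenpair m a b K Rf rho th lam psi ->
  (forall x, inOmega m a b x -> Rabs (Rf x th) <= C1) ->
  (forall x, inOmega m a b x -> Rabs (rho x) <= Mr) ->
  forall x, inOmega m a b x ->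
  Derive (Derive psi) x <=
    (IntOmega m a b (fun _ => CK) + Rabs C1 + Rabs Mr + Rabs lam) * psi x - cK * IntOmega m a b psi.
Proof.
  intros Ho HKd HcK HCK Hp HR Hr x Hx.
  pose proof (eig_CCO _ _ _ _ _ _ _ _ _ Ho Hp) as Cp.
  pose proof Hp as [_ [_ [_ Hpos]]].
  rewrite (eig_D2 m a b K Rf rho th lam psi x Hp Hx).
  rewrite (Lop_dec m a b K psi x Ho HKd Cp).
  assert (k1 : Kop K m a b (fun _ => 1) x <= IntOmega m a b (fun _ => CK)).
  { unfold Kop. apply IntOmega_le; auto. cco. cco. intros y _. rewrite Rmult_1_r. auto. }
  assert (k2 : cK * IntOmega m a b psi <= Kop K m a b psi x).
  { unfold Kop. rewrite <- IntOmega_scal by auto. apply IntOmega_le; auto. cco. cco.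
    intros y Hy. apply Rmult_le_compat_r. specialize (Hpos y Hy); lra. auto. }
  specialize (HR x Hx). specialize (Hr x Hx). specialize (Hpos x Hx).
  assert (Rf x th - rho x + lam >= - (Rabs C1 + Rabs Mr + Rabs lam)).
  { revert HR Hr. unfold Rabs; repeat destruct Rcase_abs; intros; lra. }
  nra.
Qed.

Lemma hopf_interval p q (psi : R -> R) B g : p < q -> 0 <= B -> 0 < g ->
  CC p q psi -> CC p q (Dt p q psi) ->
  (forall x, p < x < q -> ex_derive psi x /\ ex_derive (Derive psi) x) ->
  (forall x, p < x < q -> 0 < psi x) ->
  (forall x, p < x < q -> Derive (Derive psi) x <= B * psi x - g) ->
  0 < psi p /\ 0 < psi q.
Proof.
  intros Hpq HB Hg Cp Cd Hd Hpos HD2.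
  set (eta := g / (B + 1)).
  assert (Heta : 0 < eta) by (apply Rdiv_lt_0_compat; lra).
  assert (HBe : B * eta < g).
  { unfold eta. apply Rmult_lt_reg_r with (B + 1). lra.
    replace (B * (g / (B + 1)) * (B + 1)) with (B * g) by (field; lra). nra. }
  assert (DD : forall x, p < x < q -> is_derive (Dt p q psi) x (Derive (Derive psi) x)).
  { intros x Hx. apply is_derive_ext_loc with (Derive psi). apply Dt_loc; auto.
    apply Derive_correct. apply Hd; auto. }
  assert (D1 : forall x, p < x < q -> is_derive psi x (Dt p q psi x)).
  { intros x Hx. rewrite Dt_eq; auto. apply Derive_correct. apply Hd; auto. }
  split.
  - destruct (Rlt_or_le 0 (psi p)) as [H|H]; auto. exfalso.
    destruct (proj1 (filterlim_locally _ _) (Cp p) (mkposreal _ Heta)) as [d Hd0].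
    set (r := p + Rmin d (q - p) / 2).
    assert (Hr : p < r < q) by (unfold r; pose proof (Rmin_r d (q-p)); pose proof (Rmin_pos d (q-p) (cond_pos d) ltac:(lra)); lra).
    assert (Hsmall : forall x, p < x <= r -> Derive (Derive psi) x < 0).
    { intros x Hx. specialize (Hd0 x). simpl in Hd0. rewrite !clamp_id in Hd0 by lra.
      assert (Hb : ball p d x). { apply ballR. unfold r in Hx. pose proof (Rmin_l d (q-p)).
        pose proof (Rmin_pos d (q-p) (cond_pos d) ltac:(lra)). apply Rabs_def1; lra. }
      specialize (Hd0 Hb). apply ballR in Hd0. apply Rabs_def2 in Hd0. simpl in Hd0.
      unfold minus, plus, opp in Hd0; simpl in Hd0.
      pose proof (HD2 x ltac:(lra)). pose proof (Hpos x ltac:(lra)). nra. }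
    assert (Hneg : forall x, p < x <= r -> Dt p q psi x < 0).
    { intros x Hx. destruct (mvt_open p x (Dt p q psi) (Derive (Derive psi))) as [c [Hc E]].
      lra. apply CC_sub with p q; auto; lra. intros y Hy; apply DD; lra.
      rewrite Dt_p in E. pose proof (Hsmall c ltac:(lra)). nra. }
    destruct (mvt_open p r psi (Dt p q psi)) as [c [Hc E]]. lra. apply CC_sub with p q; auto; lra.
    intros y Hy; apply D1; lra.
    pose proof (Hneg c ltac:(lra)). pose proof (Hpos r Hr). nra.
  - destruct (Rlt_or_le 0 (psi q)) as [H|H]; auto. exfalso.
    destruct (proj1 (filterlim_locally _ _) (Cp q) (mkposreal _ Heta)) as [d Hd0].
    set (r := q - Rmin d (q - p) / 2).
    assert (Hr : p < r < q) by (unfold r; pose proof (Rmin_r d (q-p)); pose proof (Rmin_pos d (q-p) (cond_pos d) ltac:(lra)); lra).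
    assert (Hsmall : forall x, r <= x < q -> Derive (Derive psi) x < 0).
    { intros x Hx. specialize (Hd0 x). simpl in Hd0. rewrite !clamp_id in Hd0 by lra.
      assert (Hb : ball q d x). { apply ballR. unfold r in Hx. pose proof (Rmin_l d (q-p)).
        pose proof (Rmin_pos d (q-p) (cond_pos d) ltac:(lra)). apply Rabs_def1; lra. }
      specialize (Hd0 Hb). apply ballR in Hd0. apply Rabs_def2 in Hd0. simpl in Hd0.
      unfold minus, plus, opp in Hd0; simpl in Hd0.
      pose proof (HD2 x ltac:(lra)). pose proof (Hpos x ltac:(lra)). nra. }
    assert (Hposd : forall x, r <= x < q -> 0 < Dt p q psi x).
    { intros x Hx. destruct (mvt_open x q (Dt p q psi) (Derive (Derive psi))) as [c [Hc E]].
      lra. apply CC_sub with p q; auto; lra. intros y Hy; apply DD; lra.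
      rewrite Dt_q in E. pose proof (Hsmall c ltac:(lra)). nra. }
    destruct (mvt_open r q psi (Dt p q psi)) as [c [Hc E]]. lra. apply CC_sub with p q; auto; lra.
    intros y Hy; apply D1; lra.
    pose proof (Hposd c ltac:(lra)). pose proof (Hpos r Hr). nra.
Qed.

Lemma IntOmega_zero m a b : ordered_intervals m a b -> IntOmega m a b (fun _ => 0) = 0.
Proof.
  intros Ho. transitivity (IntOmega m a b (fun _ => 0 * 0)). apply IntOmega_ext; auto; intros; ring.
  rewrite IntOmega_scal; auto. ring. cco.
Qed.

Lemma psi_pos_bar m a b (K rho : R -> R) (Rf : R -> R -> R) th lam psi cK CK C1 Mr :
  ordered_intervals m a b -> (forall x, ex_derive K x) ->
  (forall x, cK <= K x) -> (forall x, K x <= CK) -> 0 < cK -> 0 <= CK ->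
  principal_eigenpair m a b K Rf rho th lam psi ->
  (forall x, inOmega m a b x -> Rabs (Rf x th) <= C1) ->
  (forall x, inOmega m a b x -> Rabs (rho x) <= Mr) ->
  forall x, inOmegaBar m a b x -> 0 < psi x.
Proof.
  intros Ho HKd HcK HCK HcK0 HCK0 Hp HR Hr x [i [Hi Hx]].
  pose proof (eig_CCO _ _ _ _ _ _ _ _ _ Ho Hp) as Cp.
  pose proof Hp as [Hd [_ [_ Hpos]]].
  pose proof (ab_lt m a b i Ho Hi).
  assert (J : 0 < IntOmega m a b psi) by (apply IntOmega_pos; auto).
  assert (Ck : 0 <= IntOmega m a b (fun _ => CK)).
  { rewrite <- (IntOmega_zero m a b Ho). apply IntOmega_le; auto; cco. }
  destruct (hopf_interval (a i) (b i) psi (IntOmega m a b (fun _ => CK) + Rabs C1 + Rabs Mr + Rabs lam)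
    (cK * IntOmega m a b psi)) as [Pa Pb]; auto.
  pose proof (Rabs_pos C1); pose proof (Rabs_pos Mr); pose proof (Rabs_pos lam); lra.
  apply Rmult_lt_0_compat; auto.
  eapply eig_DtCC; eauto.
  intros y Hy; apply Hd; exists i; auto.
  intros y Hy; apply Hpos; exists i; auto.
  intros y Hy. eapply D2_bound; eauto. exists i; auto.
  destruct Hx as [[Hx1|Hx1] [Hx2|Hx2]].
  apply Hpos; exists i; auto. subst; auto. subst; auto. subst; auto.
Qed.

Lemma R_mvt m a b A (Rf Rt : R -> R -> R) th th' x : inOmega m a b x -> - A < th < A -> - A < th' < A ->
  (forall x t, openDom m a b A (x, t) -> is_derive (fun s => Rf x s) t (Rt x t)) ->
  exists xi, Rmin th th' <= xi <= Rmax th th' /\ Rf x th' - Rf x th = Rt x xi * (th' - th).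
Proof.
  intros Hx H1 H2 Hd.
  assert (Hin : forall t, Rmin th th' <= t <= Rmax th th' -> openDom m a b A (x, t)).
  { intros t Ht. split; auto. simpl. unfold Rmin, Rmax in Ht; destruct Rle_dec; lra. }
  destruct (MVT_gen (fun s => Rf x s) th th' (Rt x)) as [c [Hc E]].
  - intros t Ht. apply Hd, Hin; lra.
  - intros t Ht. apply continuity_pt_filterlim.
    apply (ex_derive_continuous (K := R_AbsRing) (V := R_NormedModule) (fun s => Rf x s)).
    eexists; apply Hd, Hin; auto.
  - exists c; split; auto.
Qed.

Lemma amgm (x y be : R) : 0 < be -> Rabs x * Rabs y <= (be * x ^ 2 + y ^ 2 / be) / 2.
Proof.
  intros Hb. pose proof (pow2_ge_0 (Rabs x - Rabs y / be)).
  rewrite <- (pow2_abs x), <- (pow2_abs y).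
  assert (E : (be * Rabs x ^ 2 + Rabs y ^ 2 / be) / 2 - Rabs x * Rabs y = be / 2 * (Rabs x - Rabs y / be) ^ 2)
    by (field; lra).
  assert (0 <= be / 2 * (Rabs x - Rabs y / be) ^ 2) by (apply Rmult_le_pos; lra).
  lra.
Qed.

Theorem proposition1
  (A : R) (m : nat) (a b : nat -> R) (Rf : R -> R -> R) (CR : R)
  (K : R -> R) (cK CK : R) (rho : R -> R)
  (lam : R -> R) (psi : R -> R -> R)
  (HA : 0 < A)
  (HOm : ordered_intervals m a b)
  (HR : reaction_hyp m a b A Rf CR)
  (HK : kernel_hyp K cK CK)
  (Hrho : bounded_smooth_on_Omega m a b rho)
  (Heig : forall theta, - A < theta < A ->
     principal_eigenpair m a b K Rf rho theta (lam theta) (psi theta) /\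
     L2_normalized m a b (psi theta)) :
  forall theta, - A < theta < A ->
    is_derive lam theta
      (- IntOmega m a b
           (fun x => Derive (fun t => Rf x t) theta * (psi theta x) ^ 2)).
Proof.
  intros th Hth.
  destruct HR as [Rx [Rt [CRf [CRx [CRt [HRd [c0 [Hc0 Hb]]]]]]]].
  destruct HK as [HcK0 [Hev [HKd [HKc [HKb HKd']]]]].
  destruct Hrho as [[Mr HMr] _].
  assert (HcK : forall x, cK <= K x) by (intros x; destruct (HKb x); lra).
  assert (HCK : forall x, K x <= CK) by (intros x; destruct (HKb x); lra).
  assert (HCK0 : 0 <= CK) by (destruct (HKb 0); lra).
  set (B := Rabs c0).
  assert (HB0 : 0 <= B) by apply Rabs_pos.
  assert (HbR : forall x t, openDom m a b A (x, t) -> Rabs (Rf x t) <= B /\ Rabs (Rt x t) <= B).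
  { intros x t H. destruct (Hb x t H) as [H1 [_ H3]]. unfold B. pose proof (Rle_abs c0). split; lra. }
  assert (HRt : forall x t, openDom m a b A (x, t) -> is_derive (fun s => Rf x s) t (Rt x t)).
  { intros x t H; apply HRd; auto. }
  destruct (Heig th Hth) as [Hp Np].
  set (ps := psi th).
  pose proof (eig_CCO _ _ _ _ _ _ _ _ _ HOm Hp) as Cp.
  assert (Hpb : forall x, inOmegaBar m a b x -> 0 < ps x).
  { apply (psi_pos_bar m a b K rho Rf th (lam th) ps cK CK B Mr); auto.
    intros x Hx. apply (HbR x th). split; auto. }
  assert (Hpo : forall x, inOmega m a b x -> 0 < ps x).
  { intros x [i [Hi Hx]]. apply Hpb. exists i; split; auto; lra. }
  destruct (psi_bound m a b ps HOm Cp) as [M [HM HpM]].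
  assert (CRt0 : CCO m a b (fun x => Rt x th)) by (eapply cont2_CCO; eauto).
  assert (CRf0 : CCO m a b (fun x => Rf x th)) by (eapply cont2_CCO; eauto).
  set (T := IntOmega m a b (fun x => Rt x th * ps x ^ 2)).
  replace (IntOmega m a b (fun x => Derive (fun t => Rf x t) th * psi th x ^ 2)) with T.
  2:{ apply IntOmega_ext; auto. intros x Hx. replace (Derive (fun t => Rf x t) th) with (Rt x th). auto. symmetry. apply is_derive_unique. apply HRt. split; auto. }
  apply is_derive_Reals. intros eps Heps.
  set (be := eps / (3 * (B + 1))).
  assert (Hbe : 0 < be) by (unfold be; apply Rdiv_lt_0_compat; lra).
  set (tau := Rmin (3 / 4) (be ^ 2)).
  assert (Htau : 0 < tau) by (unfold tau; apply Rmin_pos; [lra | apply pow_lt; lra]).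
  set (eta := eps / 6).
  destruct (unif_cont m a b A Rt th HOm Hth CRt eta ltac:(unfold eta; lra)) as [d1 [Hd1 Hu1]].
  assert (HA' : 0 < (A - Rabs th) / 2) by (unfold Rabs; destruct Rcase_abs; lra).
  assert (Hd3 : 0 < tau * cK / (2 * (B + 1) * M ^ 2)).
  { apply Rdiv_lt_0_compat. apply Rmult_lt_0_compat; lra.
    apply Rmult_lt_0_compat. lra. apply pow_lt; lra. }
  set (del := Rmin d1 (Rmin ((A - Rabs th) / 2) (tau * cK / (2 * (B + 1) * M ^ 2)))).
  assert (Hdel : 0 < del) by (unfold del; repeat apply Rmin_pos; auto).
  exists (mkposreal _ Hdel). intros h Hh0 Hhd. simpl in Hhd. unfold del in Hhd.
  assert (Hd1' : Rabs h <= d1) by (pose proof (Rmin_l d1 (Rmin ((A - Rabs th) / 2) (tau * cK / (2 * (B + 1) * M ^ 2))));  lra).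
  assert (Hd2' : Rabs h <= (A - Rabs th) / 2).
  { pose proof (Rmin_r d1 (Rmin ((A - Rabs th) / 2) (tau * cK / (2 * (B + 1) * M ^ 2)))).
    pose proof (Rmin_l ((A - Rabs th) / 2) (tau * cK / (2 * (B + 1) * M ^ 2))).  lra. }
  assert (Hd3' : Rabs h < tau * cK / (2 * (B + 1) * M ^ 2)).
  { pose proof (Rmin_r d1 (Rmin ((A - Rabs th) / 2) (tau * cK / (2 * (B + 1) * M ^ 2)))).
    pose proof (Rmin_r ((A - Rabs th) / 2) (tau * cK / (2 * (B + 1) * M ^ 2))).  lra. }
  set (th' := th + h).
  assert (Hth' : - A < th' < A).
  { unfold th'. revert Hd2'. unfold Rabs; repeat destruct Rcase_abs; intros; lra. }
  destruct (Heig th' Hth') as [Hf Nf].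
  set (ph := psi th').
  pose proof (eig_CCO _ _ _ _ _ _ _ _ _ HOm Hf) as Cf.
  assert (CRf1 : CCO m a b (fun x => Rf x th')) by (eapply cont2_CCO; eauto).
  assert (Hmv : forall x, inOmega m a b x -> exists xi, Rabs (xi - th) <= Rabs h /\ - A < xi < A /\ Rf x th' - Rf x th = Rt x xi * h).
  { intros x Hx. destruct (R_mvt m a b A Rf Rt th th' x Hx Hth Hth' HRt) as [xi [Hxi E]].
    exists xi. replace (th' - th) with h in E by (unfold th'; ring).
    unfold th' in *. unfold Rmin, Rmax in Hxi. destruct Rle_dec.
    - split. unfold Rabs; repeat destruct Rcase_abs; lra. split; auto. lra.
    - split. unfold Rabs; repeat destruct Rcase_abs; lra. split; auto. lra. }
  assert (Hs : forall x, inOmega m a b x -> Rabs (Rf x th' - Rf x th) <= B * Rabs h).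
  { intros x Hx. destruct (Hmv x Hx) as [xi [_ [Hxi E]]]. rewrite E, Rabs_mult.
    apply Rmult_le_compat_r. apply Rabs_pos. apply (HbR x xi). split; auto. }
  assert (Hq : forall x, inOmega m a b x -> Rabs ((Rf x th' - Rf x th) / h - Rt x th) < eta).
  { intros x Hx. destruct (Hmv x Hx) as [xi [Hxi [_ E]]]. rewrite E.
    replace (Rt x xi * h / h) with (Rt x xi) by (field; auto). apply Hu1; auto. lra. }
  pose proof Hf as [_ [_ [_ Hfpos]]].
  set (c := IntOmega m a b (fun x => ph x * ps x)).
  set (S := IntOmega m a b (fun x => (Rf x th' - Rf x th) * ph x * ps x)).
  set (dl := lam th' - lam th).
  assert (I1 : S + dl * c = 0) by (apply (pair_I1 m a b K rho Rf th th' (lam th) (lam th') ps ph); auto).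
  assert (Hc : 0 < c).
  { apply IntOmega_pos; auto. cco. intros x Hx. apply Rmult_lt_0_compat; auto. }
  assert (HSb : Rabs S <= B * Rabs h * c).
  { eapply Rle_trans. apply IntOmega_abs; auto. cco.
    unfold c. rewrite <- IntOmega_scal by cco. apply IntOmega_le; auto. cco. cco.
    intros x Hx. rewrite Rmult_assoc, Rabs_mult. apply Rmult_le_compat; auto. apply Rabs_pos. apply Rabs_pos.
    rewrite Rabs_pos_eq. lra. apply Rlt_le, Rmult_lt_0_compat; auto. }
  assert (Hdl : Rabs dl <= B * Rabs h).
  { assert (E : dl = - S / c). { apply (Rmult_eq_reg_r c); [|lra]. unfold Rdiv. rewrite Rmult_assoc, Rinv_l by lra. lra. }
    rewrite E. unfold Rdiv. rewrite Rabs_mult, Rabs_Ropp, Rabs_inv, (Rabs_pos_eq c) by lra.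
    apply Rmult_le_reg_r with c; auto. rewrite Rmult_assoc, Rinv_l by lra. lra. }
  assert (Gp : cK / M ^ 2 * (1 - c ^ 2) <= B * Rabs h + Rabs dl).
  { assert (G1 : forall x, inOmegaBar m a b x -> ps x <> 0) by (intros x Hx; pose proof (Hpb x Hx); lra).
    assert (G2 : forall x, inOmega m a b x -> 0 < ps x <= M) by (intros x Hx; split; auto).
    assert (G3 : 0 <= B * Rabs h) by (apply Rmult_le_pos; auto; apply Rabs_pos).
    apply (gap_result m a b K rho Rf th th' (lam th) (lam th') ps ph cK M (B * Rabs h)); auto. }
  assert (Hc2 : 1 - c ^ 2 < tau).
  { assert (HM2 : 0 < M ^ 2) by (apply pow_lt; lra).
    assert (E1 : 1 - c ^ 2 <= 2 * B * Rabs h * M ^ 2 / cK).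
    { apply Rmult_le_reg_l with (cK / M ^ 2). apply Rdiv_lt_0_compat; lra.
      replace (cK / M ^ 2 * (2 * B * Rabs h * M ^ 2 / cK)) with (2 * B * Rabs h) by (field; lra). lra. }
    assert (E2 : 2 * B * Rabs h * M ^ 2 / cK <= 2 * (B + 1) * Rabs h * M ^ 2 / cK).
    { unfold Rdiv. apply Rmult_le_compat_r. apply Rlt_le, Rinv_0_lt_compat; lra.
      apply Rmult_le_compat_r. lra. apply Rmult_le_compat_r. apply Rabs_pos. lra. }
    assert (E3 : 2 * (B + 1) * Rabs h * M ^ 2 / cK < tau).
    { apply Rmult_lt_reg_r with (cK / (2 * (B + 1) * M ^ 2)).
      apply Rdiv_lt_0_compat. lra. apply Rmult_lt_0_compat; lra.
      replace (2 * (B + 1) * Rabs h * M ^ 2 / cK * (cK / (2 * (B + 1) * M ^ 2))) with (Rabs h) by (field; lra).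
      replace (tau * (cK / (2 * (B + 1) * M ^ 2))) with (tau * cK / (2 * (B + 1) * M ^ 2)) by (field; lra). lra. }
    lra. }
  assert (Hc12 : 1 / 2 < c).
  { assert (tau <= 3 / 4) by apply Rmin_l. nra. }
  assert (Hcb : 1 - c ^ 2 <= be ^ 2).
  { assert (tau <= be ^ 2) by apply Rmin_r. lra. }
  set (u := fun x => ph x - c * ps x).
  assert (Cu : CCO m a b u) by (unfold u; cco).
  unfold L2_normalized in Np, Nf. fold ps in Np. fold ph in Nf.
  assert (Nu : IntOmega m a b (fun x => u x ^ 2) = 1 - c ^ 2).
  { transitivity (IntOmega m a b (fun x => ph x ^ 2 - (2 * c) * (ph x * ps x) + c ^ 2 * ps x ^ 2)).
    apply IntOmega_ext; auto; intros; unfold u; ring.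
    rewrite IntOmega_plus, IntOmega_minus by cco. rewrite !IntOmega_scal by cco.
    rewrite Np, Nf. fold c. ring. }
  set (X := S / h - c * T).
  assert (EX : X = IntOmega m a b (fun x => ((Rf x th' - Rf x th) / h - Rt x th) * ph x * ps x)
                   + IntOmega m a b (fun x => Rt x th * ps x * u x)).
  { rewrite <- IntOmega_plus by (unfold Rdiv; cco).
    transitivity (IntOmega m a b (fun x => / h * ((Rf x th' - Rf x th) * ph x * ps x) - c * (Rt x th * ps x ^ 2))).
    rewrite IntOmega_minus by cco. rewrite !IntOmega_scal by cco. unfold X, S, T. unfold Rdiv. ring.
    apply IntOmega_ext; auto. intros x Hx. unfold u. field. auto. }
  assert (X1 : Rabs (IntOmega m a b (fun x => ((Rf x th' - Rf x th) / h - Rt x th) * ph x * ps x)) <= eta * c).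
  { eapply Rle_trans. apply IntOmega_abs; auto. unfold Rdiv; cco.
    unfold c. rewrite <- IntOmega_scal by cco. apply IntOmega_le; auto. unfold Rdiv; cco. cco.
    intros x Hx. rewrite Rmult_assoc, Rabs_mult. rewrite (Rabs_pos_eq (ph x * ps x)).
    apply Rmult_le_compat_r. apply Rlt_le, Rmult_lt_0_compat; auto. apply Rlt_le, Hq; auto.
    apply Rlt_le, Rmult_lt_0_compat; auto. }
  assert (X2 : Rabs (IntOmega m a b (fun x => Rt x th * ps x * u x)) <= B * ((be * 1 + (1 - c ^ 2) / be) / 2)).
  { eapply Rle_trans. apply IntOmega_abs; auto. cco.
    assert (E : IntOmega m a b (fun x => B * ((be * ps x ^ 2 + u x ^ 2 / be) / 2)) = B * ((be * 1 + (1 - c ^ 2) / be) / 2)).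
    { transitivity (IntOmega m a b (fun x => (B * be / 2) * ps x ^ 2 + (B / (2 * be)) * u x ^ 2)).
      apply IntOmega_ext; auto; intros; field; lra.
      rewrite IntOmega_plus by cco. rewrite !IntOmega_scal by cco. rewrite Np, Nu. field. lra. }
    rewrite <- E. apply IntOmega_le; auto. cco. unfold Rdiv; cco.
    intros x Hx. rewrite Rmult_assoc, !Rabs_mult. apply Rmult_le_compat. apply Rabs_pos.
    apply Rmult_le_pos; apply Rabs_pos. apply (HbR x th). split; auto. apply amgm; auto. }
  assert (HX : Rabs X <= eta * c + B * ((be * 1 + (1 - c ^ 2) / be) / 2)).
  { rewrite EX. eapply Rle_trans. apply Rabs_triang. lra. }
  assert (Efin : dl / h - - T = - X / c).
  { unfold X. assert (E : dl = - S / c). { apply (Rmult_eq_reg_r c); [|lra]. unfold Rdiv. rewrite Rmult_assoc, Rinv_l by lra. lra. }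
    rewrite E. field. split; lra. }
  replace (lam th' - lam th) with dl by reflexivity.
  replace (IntOmega m a b (fun x => Derive (fun t => Rf x t) th * ps x ^ 2)) with T.
  2:{ apply IntOmega_ext; auto. intros x Hx. replace (Derive (fun t => Rf x t) th) with (Rt x th). auto. symmetry. apply is_derive_unique. apply HRt. split; auto. }
  rewrite Efin. unfold Rdiv. rewrite Rabs_mult, Rabs_Ropp, Rabs_inv, (Rabs_pos_eq c) by lra.
  assert (Hq1 : (1 - c ^ 2) / be <= be).
  { apply Rmult_le_reg_r with be; auto. unfold Rdiv. rewrite Rmult_assoc, Rinv_l by lra. nra. }
  assert (Hbb : B * be < eps / 3).
  { unfold be. apply Rmult_lt_reg_r with (3 * (B + 1)). lra.
    replace (B * (eps / (3 * (B + 1))) * (3 * (B + 1))) with (B * eps) by (field; lra).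
    replace (eps / 3 * (3 * (B + 1))) with (B * eps + eps) by (field; lra). lra. }
  apply Rle_lt_trans with ((eta * c + B * be) * / c).
  { apply Rmult_le_compat_r. apply Rlt_le, Rinv_0_lt_compat; lra.
    assert (B * ((be * 1 + (1 - c ^ 2) / be) / 2) <= B * be).
    { apply Rmult_le_compat_l; auto. lra. }
    lra. }
  replace ((eta * c + B * be) * / c) with (eta + B * be / c) by (field; lra).
  assert (B * be / c <= 2 * (B * be)).
  { apply Rmult_le_reg_r with c; auto. unfold Rdiv. rewrite Rmult_assoc, Rinv_l by lra.
    assert (0 <= B * be) by (apply Rmult_le_pos; lra). nra. }
  unfold eta. lra.
Qed.
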